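(* There is an arithmetical comprehension term $\mathsf{disj}(X,Y)$ such that $\mathsf{ACA}_0$ proves, for all linear orders $\alpha,\beta$: (1) $\mathsf{disj}(\alpha,\beta)$ is a linear order; (2) $\mathsf{WO}(\mathsf{disj}(\alpha,\beta))\leftrightarrow\mathsf{WO}(\alpha)\vee\mathsf{WO}(\beta)$; (3) if there is an infinite descending chain $b_0\succ_\beta b_1\succ_\beta\cdots$ in $\beta$, then there is an embedding (order-preserving map) $f\colon\alpha\to\mathsf{disj}(\alpha,\beta)$.
   Context: Linear orders are pairs $\alpha=\langle D_\alpha,\prec_\alpha\rangle$ with $D_\alpha\subseteq\mathbb N$ and $\prec_\alpha$ a strict linear order on $D_\alpha$; $\mathsf{WO}(\alpha)$ says $\alpha$ is well-ordered. An arithmetical comprehension term is a term $\{x:\theta(x,X,Y)\}$ with $\theta$ arithmetical, whose existence is guaranteed by arithmetical comprehension. *)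

(* Defs.v *)
(* Syntax and Henkin semantics of second-order arithmetic,
   models of ACA_0, and the notions LO / WO / descending sequence / embedding
   interpreted inside such a model.  "ACA_0 proves phi" is rendered
   semantically (Goedel completeness): phi holds in every model of ACA_0. *)
From Stdlib Require Import List.
Import ListNotations.

(* ---------- syntax of L_2 (de Bruijn indices; number and set variables
   are separate sorts) ---------- *)
Inductive term : Type :=
| tvar  : nat -> term
| tzero : term
| tone  : term
| tadd  : term -> term -> term
| tmul  : term -> term -> term.

Inductive formula : Type :=
| feq   : term -> term -> formula
| flt   : term -> term -> formula
| fmem  : term -> nat -> formula        (* t \in X_i *)
| fneg  : formula -> formula
| fand  : formula -> formula -> formula
| f_or  : formula -> formula -> formula
| fimp  : formula -> formula -> formula
| fall  : formula -> formula
| fex   : formula -> formula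
| fallS : formula -> formula
| fexS  : formula -> formula.

Fixpoint arithmetical (f : formula) : Prop :=
  match f with
  | feq _ _ | flt _ _ | fmem _ _ => True
  | fneg g | fall g | fex g => arithmetical g
  | fand g h | f_or g h | fimp g h => arithmetical g /\ arithmetical h
  | fallS _ | fexS _ => False
  end.

Record L2str : Type := {
  Mc : Type;
  Sc : Type;
  zero : Mc;
  one : Mc;
  add : Mc -> Mc -> Mc;
  mul : Mc -> Mc -> Mc;
  lt : Mc -> Mc -> Prop;
  mem : Mc -> Sc -> Prop
}.

Definition scons {A : Type} (a : A) (e : nat -> A) : nat -> A :=
  fun n => match n with 0 => a | S k => e k end.

Section Semantics.
Variable A : L2str.

Fixpoint tev (e : nat -> Mc A) (t : term) : Mc A :=
  match t with
  | tvar n => e n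
  | tzero => zero A
  | tone => one A
  | tadd u v => add A (tev e u) (tev e v)
  | tmul u v => mul A (tev e u) (tev e v)
  end.

Fixpoint fev (e : nat -> Mc A) (s : nat -> Sc A) (f : formula) : Prop :=
  match f with
  | feq u v => tev e u = tev e v
  | flt u v => lt A (tev e u) (tev e v)
  | fmem u i => mem A (tev e u) (s i)
  | fneg g => ~ fev e s g
  | fand g h => fev e s g /\ fev e s h
  | f_or g h => fev e s g \/ fev e s h
  | fimp g h => fev e s g -> fev e s h
  | fall g => forall m : Mc A, fev (scons m e) s g
  | fex g => exists m : Mc A, fev (scons m e) s g
  | fallS g => forall X : Sc A, fev e (scons X s) g
  | fexS g => exists X : Sc A, fev e (scons X s) g
  end.

(* ---------- ACA_0 (Simpson, Def. I.2.4 basic axioms + induction axiom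
   + arithmetical comprehension scheme) ---------- *)
Definition ACA0 : Prop :=
  (forall m, add A m (one A) <> zero A) /\
  (forall m n, add A m (one A) = add A n (one A) -> m = n) /\
  (forall m, add A m (zero A) = m) /\
  (forall m n, add A m (add A n (one A)) = add A (add A m n) (one A)) /\
  (forall m, mul A m (zero A) = zero A) /\
  (forall m n, mul A m (add A n (one A)) = add A (mul A m n) m) /\
  (forall m, ~ lt A m (zero A)) /\
  (forall m n, lt A m (add A n (one A)) <-> (lt A m n \/ m = n)) /\
  (forall X : Sc A, mem A (zero A) X ->
      (forall n, mem A n X -> mem A (add A n (one A)) X) ->
      forall n, mem A n X) /\
  (forall (phi : formula) (e : nat -> Mc A) (s : nat -> Sc A),
      arithmetical phi ->
      exists X : Sc A, forall m, mem A m X <-> fev (scons m e) s phi).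

Definition pair (i j : Mc A) : Mc A :=
  add A (mul A (add A i j) (add A i j)) i.

Definition IsLO (D R : Sc A) : Prop :=
  (forall x y, mem A (pair x y) R -> mem A x D /\ mem A y D) /\
  (forall x, ~ mem A (pair x x) R) /\
  (forall x y z, mem A (pair x y) R -> mem A (pair y z) R -> mem A (pair x z) R) /\
  (forall x y, mem A x D -> mem A y D ->
      mem A (pair x y) R \/ x = y \/ mem A (pair y x) R).

Definition DescSeq (D R : Sc A) : Prop :=
  exists F : Sc A,
    (forall n, exists m, mem A (pair n m) F /\ mem A m D) /\
    (forall n m m', mem A (pair n m) F -> mem A (pair n m') F -> m = m') /\
    (forall n m m', mem A (pair n m) F -> mem A (pair (add A n (one A)) m') F ->
        mem A (pair m' m) R).

Definition WO (D R : Sc A) : Prop := IsLO D R /\ ~ DescSeq D R.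

Definition Embedding (D1 R1 D2 R2 : Sc A) : Prop :=
  exists F : Sc A,
    (forall x, mem A x D1 -> exists y, mem A (pair x y) F /\ mem A y D2) /\
    (forall x y y', mem A x D1 -> mem A (pair x y) F -> mem A (pair x y') F -> y = y') /\
    (forall x x' y y', mem A x D1 -> mem A x' D1 ->
        mem A (pair x y) F -> mem A (pair x' y') F ->
        mem A (pair x x') R1 -> mem A (pair y y') R2).

(* X is the set {x : theta(x, D_alpha, R_alpha, D_beta, R_beta)}:
   number variable 0 (and, by convention, every other free number variable)
   denotes x; set variables 0,1,2,3 denote D_alpha, R_alpha, D_beta, R_beta
   (free set variables >= 4 also denote D_alpha). *)
Definition params (Da Ra Db Rb : Sc A) : nat -> Sc A :=
  fun i => nth i [Da; Ra; Db; Rb] Da.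

Definition defines (theta : formula) (Da Ra Db Rb X : Sc A) : Prop :=
  forall x : Mc A, mem A x X <-> fev (fun _ => x) (params Da Ra Db Rb) theta.

End Semantics.

(* Main.v *)
Require Import Defs.
From Stdlib Require Import List Classical Setoid Ring.
Import ListNotations.

Fixpoint tren (r : nat -> nat) (t : term) : term :=
  match t with
  | tvar n => tvar (r n)
  | tzero => tzero
  | tone => tone
  | tadd u v => tadd (tren r u) (tren r v)
  | tmul u v => tmul (tren r u) (tren r v)
  end.

Definition upr (r : nat -> nat) : nat -> nat :=
  fun n => match n with 0 => 0 | S k => S (r k) end.

Fixpoint fren (r : nat -> nat) (f : formula) : formula :=
  match f with
  | feq u v => feq (tren r u) (tren r v)
  | flt u v => flt (tren r u) (tren r v)
  | fmem u i => fmem (tren r u) i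
  | fneg g => fneg (fren r g)
  | fand g h => fand (fren r g) (fren r h)
  | f_or g h => f_or (fren r g) (fren r h)
  | fimp g h => fimp (fren r g) (fren r h)
  | fall g => fall (fren (upr r) g)
  | fex g => fex (fren (upr r) g)
  | fallS g => fallS (fren r g)
  | fexS g => fexS (fren r g)
  end.

Lemma tev_ren (A : L2str) r e t : tev A e (tren r t) = tev A (fun n => e (r n)) t.
Proof. induction t; simpl; congruence. Qed.

Lemma tev_ext (A : L2str) e e' t : (forall n, e n = e' n) -> tev A e t = tev A e' t.
Proof. intro H; induction t; simpl; congruence. Qed.

Lemma fev_ext (A : L2str) phi : forall e e' s, (forall n, e n = e' n) ->
  (fev A e s phi <-> fev A e' s phi).
Proof.
  induction phi; intros e e' s H; simpl.
  - rewrite (tev_ext A e e' t H), (tev_ext A e e' t0 H); tauto.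
  - rewrite (tev_ext A e e' t H), (tev_ext A e e' t0 H); tauto.
  - rewrite (tev_ext A e e' t H); tauto.
  - rewrite (IHphi e e' s H); tauto.
  - rewrite (IHphi1 e e' s H), (IHphi2 e e' s H); tauto.
  - rewrite (IHphi1 e e' s H), (IHphi2 e e' s H); tauto.
  - rewrite (IHphi1 e e' s H), (IHphi2 e e' s H); tauto.
  - split; intros H1 m; (eapply IHphi; [|apply H1]); intros [|n]; simpl; auto.
  - split; intros [m H1]; exists m; (eapply IHphi; [|apply H1]); intros [|n]; simpl; auto.
  - split; intros H1 X; (eapply IHphi; [|apply H1]); auto.
  - split; intros [X H1]; exists X; (eapply IHphi; [|apply H1]); auto.
Qed.

Lemma fev_ren (A : L2str) phi : forall r e s,
  fev A e s (fren r phi) <-> fev A (fun n => e (r n)) s phi.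
Proof.
  induction phi; intros r e s; simpl; rewrite ?tev_ren; try tauto.
  - rewrite IHphi; tauto.
  - rewrite IHphi1, IHphi2; tauto.
  - rewrite IHphi1, IHphi2; tauto.
  - rewrite IHphi1, IHphi2; tauto.
  - split; intros H m; specialize (H m); rewrite IHphi in *;
      (eapply fev_ext; [|apply H]); intros [|n]; simpl; auto.
  - split; intros [m H]; exists m; rewrite IHphi in *;
      (eapply fev_ext; [|apply H]); intros [|n]; simpl; auto.
  - split; intros H X; specialize (H X); rewrite IHphi in *; auto.
  - split; intros [X H]; exists X; rewrite IHphi in *; auto.
Qed.

Lemma arith_ren r phi : arithmetical phi -> arithmetical (fren r phi).
Proof. revert r; induction phi; simpl; intros r H; try tauto; try (destruct H; split; eauto); eauto. Qed.

Definition DefU (P : forall A : L2str, (nat -> Mc A) -> (nat -> Sc A) -> Prop) :=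
  exists phi, arithmetical phi /\ forall A e s, P A e s <-> fev A e s phi.
Definition TU (f : forall A : L2str, (nat -> Mc A) -> Mc A) :=
  exists t, forall A e, f A e = tev A e t.

Lemma tu_var n : TU (fun A e => e n).
Proof. exists (tvar n); reflexivity. Qed.
Lemma tu_zero : TU (fun A e => zero A).
Proof. exists tzero; reflexivity. Qed.
Lemma tu_one : TU (fun A e => one A).
Proof. exists tone; reflexivity. Qed.
Lemma tu_add f g : TU f -> TU g -> TU (fun A e => add A (f A e) (g A e)).
Proof. intros [t Ht] [u Hu]; exists (tadd t u); intros; simpl; rewrite Ht, Hu; auto. Qed.
Lemma tu_mul f g : TU f -> TU g -> TU (fun A e => mul A (f A e) (g A e)).
Proof. intros [t Ht] [u Hu]; exists (tmul t u); intros; simpl; rewrite Ht, Hu; auto. Qed.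
Lemma tu_pair f g : TU f -> TU g -> TU (fun A e => pair A (f A e) (g A e)).
Proof. intros Hf Hg. unfold pair. apply tu_add; [apply tu_mul; apply tu_add|]; auto. Qed.

Lemma du_eq f g : TU f -> TU g -> DefU (fun A e s => f A e = g A e).
Proof. intros [t Ht] [u Hu]; exists (feq t u); split; [exact I|]; intros; simpl; rewrite Ht, Hu; tauto. Qed.
Lemma du_lt f g : TU f -> TU g -> DefU (fun A e s => lt A (f A e) (g A e)).
Proof. intros [t Ht] [u Hu]; exists (flt t u); split; [exact I|]; intros; simpl; rewrite Ht, Hu; tauto. Qed.
Lemma du_mem i f : TU f -> DefU (fun A e s => mem A (f A e) (s i)).
Proof. intros [t Ht]; exists (fmem t i); split; [exact I|]; intros; simpl; rewrite Ht; tauto. Qed.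
Lemma du_false : DefU (fun A e s => False).
Proof. exists (fneg (feq tzero tzero)); split; [exact I|]; intros; simpl; tauto. Qed.
Lemma du_true : DefU (fun A e s => True).
Proof. exists (feq tzero tzero); split; [exact I|]; intros; simpl; tauto. Qed.
Lemma du_and P Q : DefU P -> DefU Q -> DefU (fun A e s => P A e s /\ Q A e s).
Proof. intros [p [Hp1 Hp]] [q [Hq1 Hq]]; exists (fand p q); split; [split; auto|]; intros; simpl; rewrite Hp, Hq; tauto. Qed.
Lemma du_or P Q : DefU P -> DefU Q -> DefU (fun A e s => P A e s \/ Q A e s).
Proof. intros [p [Hp1 Hp]] [q [Hq1 Hq]]; exists (f_or p q); split; [split; auto|]; intros; simpl; rewrite Hp, Hq; tauto. Qed.
Lemma du_imp P Q : DefU P -> DefU Q -> DefU (fun A e s => P A e s -> Q A e s).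
Proof. intros [p [Hp1 Hp]] [q [Hq1 Hq]]; exists (fimp p q); split; [split; auto|]; intros; simpl; rewrite Hp, Hq; tauto. Qed.
Lemma du_iff P Q : DefU P -> DefU Q -> DefU (fun A e s => P A e s <-> Q A e s).
Proof. intros. unfold iff. apply du_and; apply du_imp; auto. Qed.
Lemma du_all (P : forall A : L2str, Mc A -> (nat -> Mc A) -> (nat -> Sc A) -> Prop) :
  DefU (fun A e s => P A (e 0) (fun n => e (S n)) s) ->
  DefU (fun A e s => forall m, P A m e s).
Proof. intros [p [Hp1 Hp]]; exists (fall p); split; auto; intros; simpl.
  split; intros H m; [apply (Hp A (scons m e)); apply H | apply (Hp A (scons m e) s); apply H]. Qed.
Lemma du_ex (P : forall A : L2str, Mc A -> (nat -> Mc A) -> (nat -> Sc A) -> Prop) :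
  DefU (fun A e s => P A (e 0) (fun n => e (S n)) s) ->
  DefU (fun A e s => exists m, P A m e s).
Proof. intros [p [Hp1 Hp]]; exists (fex p); split; auto; intros; simpl.
  split; intros [m H]; exists m; [apply (Hp A (scons m e)); apply H | apply (Hp A (scons m e) s); apply H]. Qed.
Lemma du_ren P r : DefU P -> DefU (fun A e s => P A (fun n => e (r n)) s).
Proof. intros [p [Hp1 Hp]]; exists (fren r p); split; [apply arith_ren; auto|]; intros.
  rewrite fev_ren, Hp; tauto. Qed.

Ltac solve_tu := first
  [ apply tu_var | apply tu_zero | apply tu_one
  | apply tu_pair; solve_tu | apply tu_add; solve_tu | apply tu_mul; solve_tu ].

Ltac solve_def := cbv beta delta [not iff]; first
  [ apply du_true | apply du_false
  | apply du_and; solve_def | apply du_or; solve_def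
  | apply du_imp; solve_def
  | apply du_all; solve_def | apply du_ex; solve_def
  | apply du_eq; solve_tu | apply du_lt; solve_tu | apply du_mem; solve_tu
  | idtac ].

Lemma ind_u (P : forall A : L2str, Mc A -> (nat -> Mc A) -> (nat -> Sc A) -> Prop) :
  DefU (fun A e s => P A (e 0) (fun n => e (S n)) s) ->
  forall A, ACA0 A -> forall e s, P A (zero A) e s ->
  (forall n, P A n e s -> P A (add A n (one A)) e s) -> forall n, P A n e s.
Proof.
  intros [p [Hp1 Hp]] A HA e s H0 HS.
  destruct HA as [_ [_ [_ [_ [_ [_ [_ [_ [Hind Hcomp]]]]]]]]].
  destruct (Hcomp p e s Hp1) as [X HX].
  assert (HX' : forall m, mem A m X <-> P A m e s).
  { intro m. rewrite HX. symmetry. apply (Hp A (scons m e) s). }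
  intro n. apply HX'. apply Hind; [apply HX'; auto|].
  intros k Hk. apply HX'. apply HS. apply HX'. auto.
Qed.

Lemma comp_u (P : forall A : L2str, Mc A -> (nat -> Mc A) -> (nat -> Sc A) -> Prop) :
  DefU (fun A e s => P A (e 0) (fun n => e (S n)) s) ->
  forall A, ACA0 A -> forall e s, exists X, forall m, mem A m X <-> P A m e s.
Proof.
  intros [p [Hp1 Hp]] A HA e s.
  destruct HA as [_ [_ [_ [_ [_ [_ [_ [_ [Hind Hcomp]]]]]]]]].
  destruct (Hcomp p e s Hp1) as [X HX].
  exists X. intro m. rewrite HX. symmetry. apply (Hp A (scons m e) s).
Qed.


Definition md (A : L2str) (x m v : Mc A) := exists q, x = add A (mul A q m) v /\ lt A v m.
Definition modu (A : L2str) (d i : Mc A) := add A (one A) (mul A (add A i (one A)) d).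
Definition dv (A : L2str) (a b : Mc A) := exists k, b = mul A k a.
Definition len (A : L2str) (x n : Mc A) := exists c d, x = pair A n (pair A c d).
Definition ent (A : L2str) (x i v : Mc A) := exists n c d, x = pair A n (pair A c d) /\ md A c (modu A d i) v.

Definition seqeq (A : L2str) (x y : Mc A) := exists n, len A x n /\ len A y n /\
  forall i, lt A i n -> forall v, ent A x i v -> ent A y i v.
Definition canon (A : L2str) (x : Mc A) := (exists n, len A x n) /\ forall y, lt A y x -> ~ seqeq A y x.
Definition node (A : L2str) (Da Ra Db Rb : Sc A) (x : Mc A) := canon A x /\ exists n, len A x n /\ lt A (zero A) n /\
  (forall i v, lt A i n -> ent A x i v -> exists a b, v = pair A a b /\ mem A a Da /\ mem A b Db) /\
  (forall i v w, lt A (add A i (one A)) n -> ent A x i v -> ent A x (add A i (one A)) w ->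
     exists a b a' b', v = pair A a b /\ w = pair A a' b' /\ mem A (pair A a' a) Ra /\ mem A (pair A b' b) Rb).
Definition kb (A : L2str) (x y : Mc A) := exists n m, len A x n /\ len A y m /\
   ((lt A m n /\ forall i v, lt A i m -> ent A y i v -> ent A x i v) \/
    (exists i, lt A i n /\ lt A i m /\ (forall j v, lt A j i -> ent A y j v -> ent A x j v) /\
       exists v w, ent A x i v /\ ent A y i w /\ lt A v w)).
Definition leo (A : L2str) (R : Sc A) (a y : Mc A) := a = y \/ mem A (pair A a y) R.
Definition recd (A : L2str) (Da Ra : Sc A) (a y : Mc A) := mem A y Da /\ leo A Ra a y /\
  forall z, lt A z y -> mem A z Da -> leo A Ra a z -> mem A (pair A y z) Ra.
Definition emb (A : L2str) (Da Ra Fb : Sc A) (a x : Mc A) := exists n, len A x n /\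
 (forall i v, lt A i n -> ent A x i v -> exists r b, v = pair A r b /\ mem A (pair A i b) Fb /\ recd A Da Ra a r) /\
 (forall i v w, lt A (add A i (one A)) n -> ent A x i v -> ent A x (add A i (one A)) w ->
    exists r b r' b', v = pair A r b /\ w = pair A r' b' /\ lt A r r') /\
 (forall y, recd A Da Ra a y -> exists i b, lt A i n /\ ent A x i (pair A y b)).

Ltac sdef := cbv beta delta [md modu dv len ent seqeq canon node kb leo recd emb]; solve_def.

Section Arith.
Variable A : L2str.
Hypothesis HA : ACA0 A.
Variable X0 : Sc A.
Local Notation M := (Mc A).
Local Infix "⊕" := (add A) (at level 50, left associativity).
Local Infix "⊗" := (mul A) (at level 40, left associativity).
Local Infix "≺" := (lt A) (at level 70).
Local Notation zA := (zero A).
Local Notation oA := (one A).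

Lemma ax_S_nz m : m ⊕ oA <> zA. Proof. apply HA. Qed.
Lemma ax_S_inj m n : m ⊕ oA = n ⊕ oA -> m = n. Proof. apply HA. Qed.
Lemma ax_add0 m : m ⊕ zA = m. Proof. apply HA. Qed.
Lemma ax_addS m n : m ⊕ (n ⊕ oA) = (m ⊕ n) ⊕ oA. Proof. apply HA. Qed.
Lemma ax_mul0 m : m ⊗ zA = zA. Proof. apply HA. Qed.
Lemma ax_mulS m n : m ⊗ (n ⊕ oA) = m ⊗ n ⊕ m. Proof. apply HA. Qed.
Lemma ax_lt0 m : ~ m ≺ zA. Proof. apply HA. Qed.
Lemma ax_ltS m n : m ≺ n ⊕ oA <-> m ≺ n \/ m = n. Proof. apply HA. Qed.

Definition e1 (a : M) : nat -> M := fun _ => a.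
Definition e2 (a b : M) : nat -> M := fun k => match k with 0 => a | _ => b end.
Definition s1 (X : Sc A) : nat -> Sc A := fun _ => X.

Definition e3 (a b c : M) : nat -> M := fun k => match k with 0 => a | 1 => b | _ => c end.
Definition e4 (a b c d : M) : nat -> M := fun k => match k with 0 => a | 1 => b | 2 => c | _ => d end.
Definition s2 (X Y : Sc A) : nat -> Sc A := fun k => match k with 0 => X | _ => Y end.
Definition s3 (X Y Z : Sc A) : nat -> Sc A := fun k => match k with 0 => X | 1 => Y | _ => Z end.
Ltac unfold_env := cbv beta iota delta [e1 e2 e3 e4 s1 s2 s3] in *.
Ltac induct P e s := refine (ind_u P _ A HA e s _ _); [sdef| unfold_env | unfold_env].

Lemma add0l n : zA ⊕ n = n.
Proof.
  revert n. induct (fun A n (e : nat -> Mc A) (s : nat -> Sc A) => add A (zero A) n = n) (e1 zA) (s1 X0).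
  - apply ax_add0.
  - intros n IH. rewrite ax_addS, IH. reflexivity.
Qed.

Lemma addSl m n : (m ⊕ oA) ⊕ n = (m ⊕ n) ⊕ oA.
Proof.
  revert n. induct (fun A n (e : nat -> Mc A) (s : nat -> Sc A) =>
    add A (add A (e 0) (one A)) n = add A (add A (e 0) n) (one A)) (e1 m) (s1 X0).
  - rewrite !ax_add0. reflexivity.
  - intros n IH. simpl in *. rewrite !ax_addS, IH. reflexivity.
Qed.

Lemma addC m n : m ⊕ n = n ⊕ m.
Proof.
  revert n. induct (fun A n (e : nat -> Mc A) (s : nat -> Sc A) =>
    add A (e 0) n = add A n (e 0)) (e1 m) (s1 X0).
  - simpl. rewrite ax_add0, add0l. reflexivity.
  - intros n IH. simpl in *. rewrite ax_addS, IH, addSl. reflexivity.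
Qed.

Lemma addA m n p : (m ⊕ n) ⊕ p = m ⊕ (n ⊕ p).
Proof.
  revert p. induct (fun A p (e : nat -> Mc A) (s : nat -> Sc A) =>
    add A (add A (e 0) (e 1)) p = add A (e 0) (add A (e 1) p)) (e2 m n) (s1 X0).
  - simpl. rewrite !ax_add0. reflexivity.
  - intros p IH. simpl in *. rewrite !ax_addS, IH. reflexivity.
Qed.

Lemma mul0l n : zA ⊗ n = zA.
Proof.
  revert n. induct (fun A n (e : nat -> Mc A) (s : nat -> Sc A) =>
    mul A (zero A) n = zero A) (e1 zA) (s1 X0).
  - apply ax_mul0.
  - intros n IH. rewrite ax_mulS, IH, ax_add0. reflexivity.
Qed.

Lemma mulSl m n : (m ⊕ oA) ⊗ n = m ⊗ n ⊕ n.
Proof.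
  revert n. induct (fun A n (e : nat -> Mc A) (s : nat -> Sc A) =>
    mul A (add A (e 0) (one A)) n = add A (mul A (e 0) n) n) (e1 m) (s1 X0).
  - simpl. rewrite !ax_mul0, ax_add0. reflexivity.
  - intros n IH. simpl in *. rewrite !ax_mulS, IH.
    rewrite !ax_addS. f_equal. rewrite !addA. f_equal. apply addC.
Qed.

Lemma mulC m n : m ⊗ n = n ⊗ m.
Proof.
  revert n. induct (fun A n (e : nat -> Mc A) (s : nat -> Sc A) =>
    mul A (e 0) n = mul A n (e 0)) (e1 m) (s1 X0).
  - simpl. rewrite ax_mul0, mul0l. reflexivity.
  - intros n IH. simpl in *. rewrite ax_mulS, IH, mulSl. reflexivity.
Qed.

Lemma mulDr m n p : m ⊗ (n ⊕ p) = m ⊗ n ⊕ m ⊗ p.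
Proof.
  revert p. induct (fun A p (e : nat -> Mc A) (s : nat -> Sc A) =>
    mul A (e 0) (add A (e 1) p) = add A (mul A (e 0) (e 1)) (mul A (e 0) p)) (e2 m n) (s1 X0).
  - simpl. rewrite ax_add0, ax_mul0, ax_add0. reflexivity.
  - intros p IH. simpl in *. rewrite ax_addS, !ax_mulS, IH, addA. reflexivity.
Qed.

Lemma mulA m n p : (m ⊗ n) ⊗ p = m ⊗ (n ⊗ p).
Proof.
  revert p. induct (fun A p (e : nat -> Mc A) (s : nat -> Sc A) =>
    mul A (mul A (e 0) (e 1)) p = mul A (e 0) (mul A (e 1) p)) (e2 m n) (s1 X0).
  - simpl. rewrite !ax_mul0. reflexivity.
  - intros p IH. simpl in *. rewrite !ax_mulS, IH, mulDr. reflexivity.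
Qed.

Lemma mul1l n : oA ⊗ n = n.
Proof.
  rewrite <- (add0l oA), mulSl, mul0l, add0l. reflexivity.
Qed.

Lemma Msrth : semi_ring_theory zA oA (add A) (mul A) (@eq M).
Proof.
  constructor.
  - apply add0l.
  - apply addC.
  - intros; symmetry; apply addA.
  - apply mul1l.
  - apply mul0l.
  - apply mulC.
  - intros; symmetry; apply mulA.
  - intros n m p. rewrite mulC, mulDr, (mulC p n), (mulC p m). reflexivity.
Qed.

Add Ring Mring : Msrth.


Lemma add_cancel a b k : a ⊕ k = b ⊕ k -> a = b.
Proof.
  revert k. induct (fun A k (e : nat -> Mc A) (s : nat -> Sc A) =>
    add A (e 0) k = add A (e 1) k -> e 0 = e 1) (e2 a b) (s1 X0).
  - simpl. rewrite !ax_add0. auto.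
  - intros k IH H. simpl in *. rewrite !ax_addS in H. apply IH, ax_S_inj, H.
Qed.

Lemma add_cancel_l a b k : k ⊕ a = k ⊕ b -> a = b.
Proof. rewrite (addC k a), (addC k b). apply add_cancel. Qed.

Lemma zero_or_S n : n = zA \/ exists k, n = k ⊕ oA.
Proof.
  revert n. induct (fun A n (e : nat -> Mc A) (s : nat -> Sc A) =>
    n = zero A \/ exists k, n = add A k (one A)) (e1 zA) (s1 X0).
  - auto.
  - intros n _. right. exists n. reflexivity.
Qed.

Lemma add_eq0 a b : a ⊕ b = zA -> a = zA /\ b = zA.
Proof.
  intros H. destruct (zero_or_S b) as [->|[k ->]].
  - rewrite ax_add0 in H. auto.
  - rewrite ax_addS in H. exfalso. eapply ax_S_nz; eauto.
Qed.

Lemma add_id a k : a ⊕ k = a -> k = zA.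
Proof. intro H. apply (add_cancel_l k zA a). rewrite ax_add0. auto. Qed.

Lemma lt_ex m n : m ≺ n <-> exists k, n = m ⊕ k ⊕ oA.
Proof.
  revert n. induct (fun A n (e : nat -> Mc A) (s : nat -> Sc A) =>
    lt A (e 0) n <-> exists k, n = add A (add A (e 0) k) (one A)) (e1 m) (s1 X0).
  - simpl. split; [intro H; exfalso; eapply ax_lt0; eauto|].
    intros [k Hk]. exfalso. eapply ax_S_nz. symmetry. eauto.
  - intros n IH. simpl in *. rewrite ax_ltS, IH. split.
    + intros [[k ->]| ->].
      * exists (k ⊕ oA). ring.
      * exists zA. ring.
    + intros [k Hk]. apply ax_S_inj in Hk.
      destruct (zero_or_S k) as [->|[k' ->]].
      * right. rewrite ax_add0 in Hk. auto.
      * left. exists k'. rewrite Hk. ring.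
Qed.

Lemma lt_intro m k : m ≺ m ⊕ k ⊕ oA.
Proof. apply lt_ex. eauto. Qed.

Lemma lt_irr m : ~ m ≺ m.
Proof.
  intro H. apply lt_ex in H. destruct H as [k Hk].
  rewrite addA in Hk. symmetry in Hk. apply add_id in Hk. eapply ax_S_nz; eauto.
Qed.

Lemma lt_trans a b c : a ≺ b -> b ≺ c -> a ≺ c.
Proof.
  rewrite !lt_ex. intros [k ->] [l ->]. exists (k ⊕ oA ⊕ l). ring.
Qed.

Lemma lt_asym a b : a ≺ b -> ~ b ≺ a.
Proof. intros H1 H2. apply (lt_irr a). eapply lt_trans; eauto. Qed.

Lemma lt_ne a b : a ≺ b -> a <> b.
Proof. intros H ->. eapply lt_irr; eauto. Qed.

Lemma lt_tri m n : m ≺ n \/ m = n \/ n ≺ m.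
Proof.
  revert n. induct (fun A n (e : nat -> Mc A) (s : nat -> Sc A) =>
    lt A (e 0) n \/ e 0 = n \/ lt A n (e 0)) (e1 m) (s1 X0).
  - simpl. destruct (zero_or_S m) as [->|[k ->]]; auto.
    right; right. apply lt_ex. exists k. ring.
  - intros n IH. simpl in *. destruct IH as [H|[H|H]].
    + left. apply ax_ltS. auto.
    + left. apply ax_ltS. auto.
    + apply lt_ex in H. destruct H as [k ->].
      destruct (zero_or_S k) as [->|[k' ->]].
      * right; left. ring.
      * right; right. apply lt_ex. exists k'. ring.
Qed.

Lemma lt_S m : m ≺ m ⊕ oA.
Proof. apply ax_ltS. auto. Qed.

Lemma lt_0S m : zA ≺ m ⊕ oA.
Proof. apply lt_ex. exists m. ring. Qed.

Lemma not_lt0 m : ~ m ≺ zA.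
Proof. apply ax_lt0. Qed.

Definition le (x y : M) := x ≺ y \/ x = y.
Local Infix "≼" := le (at level 70).

Lemma le_ex m n : m ≼ n <-> exists k, n = m ⊕ k.
Proof.
  unfold le. rewrite lt_ex. split.
  - intros [[k ->]| ->]; [exists (k ⊕ oA); ring | exists zA; ring].
  - intros [k ->]. destruct (zero_or_S k) as [->|[k' ->]].
    + right; ring.
    + left. exists k'. ring.
Qed.

Lemma le_refl m : m ≼ m. Proof. right; auto. Qed.
Lemma le_trans a b c : a ≼ b -> b ≼ c -> a ≼ c.
Proof. rewrite !le_ex. intros [k ->] [l ->]. exists (k ⊕ l). ring. Qed.
Lemma lt_le a b : a ≺ b -> a ≼ b. Proof. left; auto. Qed.
Lemma le_lt_trans a b c : a ≼ b -> b ≺ c -> a ≺ c.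
Proof. intros [H| ->] H'; auto. eapply lt_trans; eauto. Qed.
Lemma lt_le_trans a b c : a ≺ b -> b ≼ c -> a ≺ c.
Proof. intros H [H'| <-]; auto. eapply lt_trans; eauto. Qed.
Lemma not_lt m n : ~ m ≺ n -> n ≼ m.
Proof. intro H. destruct (lt_tri m n) as [?|[->|?]]; [tauto|right;auto|left;auto]. Qed.
Lemma le_not_lt m n : m ≼ n -> ~ n ≺ m.
Proof. intros [H| ->] H'; [eapply lt_asym; eauto| eapply lt_irr; eauto]. Qed.
Lemma le_antisym m n : m ≼ n -> n ≼ m -> m = n.
Proof. intros [H|H] H'; auto. exfalso. eapply le_not_lt; eauto. Qed.
Lemma lt_succ_le m n : m ≺ n ⊕ oA <-> m ≼ n.
Proof. apply ax_ltS. Qed.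
Lemma lt_le_S m n : m ≺ n <-> m ⊕ oA ≼ n.
Proof.
  rewrite lt_ex, le_ex. split; intros [k ->]; exists k; ring.
Qed.
Lemma le_0 m : zA ≼ m.
Proof. apply le_ex. exists m. ring. Qed.
Lemma le_add_r a k : a ≼ a ⊕ k.
Proof. apply le_ex. eauto. Qed.
Lemma le_add_l a k : a ≼ k ⊕ a.
Proof. apply le_ex. exists k. ring. Qed.
Lemma lt_add a b c : a ≺ b -> a ⊕ c ≺ b ⊕ c.
Proof. rewrite !lt_ex. intros [k ->]. exists k. ring. Qed.
Lemma le_add a b c : a ≼ b -> a ⊕ c ≼ b ⊕ c.
Proof. rewrite !le_ex. intros [k ->]. exists k. ring. Qed.
Lemma lt_add_inv a b c : a ⊕ c ≺ b ⊕ c -> a ≺ b.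
Proof.
  intro H. destruct (lt_tri a b) as [?|[->|H']]; auto; exfalso.
  - eapply lt_irr; eauto.
  - eapply lt_asym; [apply H|]. apply lt_add. auto.
Qed.
Lemma le_mul a b c : a ≼ b -> a ⊗ c ≼ b ⊗ c.
Proof. rewrite !le_ex. intros [k ->]. exists (k ⊗ c). ring. Qed.
Lemma lt_mul a b c : a ≺ b -> zA ≺ c -> a ⊗ c ≺ b ⊗ c.
Proof.
  rewrite !lt_ex. intros [k ->] [l ->]. exists (k ⊗ (l ⊕ oA) ⊕ l ⊕ a ⊗ zA). ring.
Qed.
Lemma le_mul_pos a c : zA ≺ c -> a ≼ a ⊗ c.
Proof.
  rewrite lt_ex. intros [l ->]. apply le_ex. exists (a ⊗ l). ring.
Qed.
Lemma pos_mul a b : zA ≺ a -> zA ≺ b -> zA ≺ a ⊗ b.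
Proof. rewrite !lt_ex. intros [k ->] [l ->]. exists (k ⊗ l ⊕ k ⊕ l). ring. Qed.
Lemma pos_S a : zA ≺ a ⊕ oA.
Proof. apply lt_0S. Qed.
Lemma pos_or a : a = zA \/ zA ≺ a.
Proof. destruct (zero_or_S a) as [->|[k ->]]; auto. right. apply lt_0S. Qed.

Lemma lnp (P : forall A : L2str, Mc A -> (nat -> Mc A) -> (nat -> Sc A) -> Prop) :
  DefU (fun A e s => P A (e 0) (fun n => e (S n)) s) ->
  forall e s, (exists n, P A n e s) -> exists n, P A n e s /\ forall m, m ≺ n -> ~ P A m e s.
Proof.
  intros HP e s [n Hn]. apply NNPP. intro Hno.
  assert (Hall : forall n, forall m, m ≺ n -> ~ P A m e s).
  { refine (ind_u (fun A n e s => forall m, lt A m n -> ~ P A m e s) _ A HA e s _ _).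
    - apply du_all. cbv beta. apply du_imp; [apply du_lt; solve_tu|].
      apply du_imp; [|apply du_false].
      exact (du_ren _ (fun n => match n with 0 => 0 | S k => S (S k) end) HP).
    - intros m H. exfalso. eapply not_lt0; eauto.
    - intros k IH m Hm. apply lt_succ_le in Hm. destruct Hm as [Hm| ->]; auto.
      intro Hk. apply Hno. exists k. split; auto. }
  apply (Hall (n ⊕ oA) n); auto. apply lt_S.
Qed.


Ltac lnp_get P e s H := refine (lnp P _ e s H); [sdef].

Lemma divmod m x : zA ≺ m -> exists q r, x = q ⊗ m ⊕ r /\ r ≺ m.
Proof.
  intro Hm. revert x. induct (fun A x (e : nat -> Mc A) (s : nat -> Sc A) =>
    exists q r, x = add A (mul A q (e 0)) r /\ lt A r (e 0)) (e1 m) (s1 X0).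
  - exists zA, zA. split; [ring| auto].
  - intros x [q [r [-> Hr]]]. apply lt_le_S in Hr. destruct Hr as [Hr| Hr].
    + exists q, (r ⊕ oA). split; [ring|auto].
    + exists (q ⊕ oA), zA. split; [rewrite <- Hr; ring|]. auto.
Qed.

Lemma divmod_uniq m q r q' r' : q ⊗ m ⊕ r = q' ⊗ m ⊕ r' -> r ≺ m -> r' ≺ m -> q = q' /\ r = r'.
Proof.
  intros H Hr Hr'.
  assert (Hq : forall q q' r r', q ≺ q' -> q ⊗ m ⊕ r = q' ⊗ m ⊕ r' -> r ≺ m -> False).
  { clear H Hr Hr' q q' r r'. intros q q' r r' Hq H Hr. apply lt_ex in Hq. destruct Hq as [k ->].
    assert (r = (k ⊗ m ⊕ r') ⊕ m). { apply (add_cancel_l _ _ (q ⊗ m)). rewrite H. ring. }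
    subst r. apply (le_not_lt m (k ⊗ m ⊕ r' ⊕ m)); auto. apply le_add_l. }
  destruct (lt_tri q q') as [H1|[<-|H1]].
  - exfalso; eapply Hq; eauto.
  - split; auto. eapply add_cancel_l; eauto.
  - exfalso; eapply Hq; eauto.
Qed.

Lemma md_fun x m v w : md A x m v -> md A x m w -> v = w.
Proof. intros [q [-> Hv]] [q' [H Hw]]. eapply divmod_uniq; eauto. Qed.
Lemma md_ex x m : zA ≺ m -> exists v, md A x m v.
Proof. intros Hm. destruct (divmod m x Hm) as [q [r [H1 H2]]]. exists r, q. auto. Qed.
Lemma md_add x m v k : md A x m v -> md A (x ⊕ k ⊗ m) m v.
Proof. intros [q [-> Hv]]. exists (q ⊕ k). split; auto. ring. Qed.

Lemma pair_lt_sum i j : pair A i j ≺ (i ⊕ j ⊕ oA) ⊗ (i ⊕ j ⊕ oA).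
Proof.
  unfold pair. apply lt_ex. exists (j ⊕ (i ⊕ j)). ring.
Qed.
Lemma pair_ge_sq i j : (i ⊕ j) ⊗ (i ⊕ j) ≼ pair A i j.
Proof. unfold pair. apply le_add_r. Qed.
Lemma sq_mono a b : a ≼ b -> a ⊗ a ≼ b ⊗ b.
Proof. rewrite !le_ex. intros [k ->]. exists (a ⊗ k ⊕ k ⊗ a ⊕ k ⊗ k). ring. Qed.

Lemma pair_inj i j i' j' : pair A i j = pair A i' j' -> i = i' /\ j = j'.
Proof.
  intro H.
  assert (Hs : forall i j i' j', i ⊕ j ≺ i' ⊕ j' -> pair A i j ≺ pair A i' j').
  { clear H i j i' j'. intros i j i' j' Hlt. eapply lt_le_trans; [apply pair_lt_sum|].
    eapply le_trans; [|apply pair_ge_sq]. apply sq_mono. apply lt_le_S in Hlt. auto. }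
  destruct (lt_tri (i ⊕ j) (i' ⊕ j')) as [H1|[H1|H1]].
  - exfalso. apply Hs in H1. rewrite H in H1. eapply lt_irr; eauto.
  - unfold pair in H. rewrite H1 in H. apply add_cancel_l in H. subst. split; auto.
    apply add_cancel_l in H1. auto.
  - exfalso. apply Hs in H1. rewrite H in H1. eapply lt_irr; eauto.
Qed.

Lemma pair_mono_l i i' j : i ≺ i' -> pair A i j ≺ pair A i' j.
Proof.
  intro H. unfold pair. apply lt_ex in H. destruct H as [k ->].
  apply lt_ex. exists ((i ⊕ j) ⊗ (k ⊕ oA) ⊕ (k ⊕ oA) ⊗ (i ⊕ j) ⊕ (k ⊕ oA) ⊗ (k ⊕ oA) ⊕ k). ring.
Qed.

Lemma modu_pos d i : zA ≺ modu A d i.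
Proof. unfold modu. apply lt_ex. exists ((i ⊕ oA) ⊗ d). ring. Qed.

Lemma len_fun x n n' : len A x n -> len A x n' -> n = n'.
Proof. intros [c [d ->]] [c' [d' H]]. apply pair_inj in H. tauto. Qed.
Lemma ent_fun x i v w : ent A x i v -> ent A x i w -> v = w.
Proof.
  intros [n [c [d [-> H1]]]] [n' [c' [d' [H H2]]]].
  apply pair_inj in H. destruct H as [_ H]. apply pair_inj in H. destruct H; subst.
  eapply md_fun; eauto.
Qed.
Lemma ent_ex x n i : len A x n -> exists v, ent A x i v.
Proof.
  intros [c [d ->]]. destruct (md_ex c (modu A d i) (modu_pos d i)) as [v Hv].
  exists v, n, c, d. auto.
Qed.

Lemma inv_alg (mi W K mj Mp Mpp k0 : M) : mi ⊗ W ⊕ oA = K ⊗ mj -> mj = oA ⊕ Mp ->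
  Mp = Mpp ⊕ oA -> K = k0 ⊕ oA -> mi ⊗ (W ⊗ Mp) = (K ⊗ Mpp ⊕ k0) ⊗ mj ⊕ oA.
Proof.
  intros H Hmj HMp HK. subst mj Mp K. apply (add_cancel _ _ (Mpp ⊕ oA)).
  transitivity ((mi ⊗ W ⊕ oA) ⊗ (Mpp ⊕ oA)); [ring|]. rewrite H. ring.
Qed.

Lemma inv_mod d i δ : zA ≺ δ -> dv A δ d -> zA ≺ d ->
  exists u k, modu A d i ⊗ u = k ⊗ modu A d (i ⊕ δ) ⊕ oA.
Proof.
  intros Hδ [ee Hd] Hdpos.
  set (j := i ⊕ δ).
  set (W := (j ⊕ oA) ⊗ (j ⊕ oA) ⊗ ee).
  set (k0 := (i ⊕ oA) ⊗ (j ⊕ oA) ⊗ ee).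
  set (Mp := (j ⊕ oA) ⊗ d).
  assert (HMp : zA ≺ Mp). { unfold Mp. rewrite mulC. apply pos_mul; auto. apply lt_0S. }
  destruct (zero_or_S Mp) as [H0|[Mpp HMpp]].
  { exfalso. rewrite H0 in HMp. eapply lt_irr; eauto. }
  exists (W ⊗ Mp), ((k0 ⊕ oA) ⊗ Mpp ⊕ k0).
  apply inv_alg; auto.
  unfold modu, W, k0, j. rewrite Hd. ring.
Qed.

Lemma crt_alg c q m r ρ Q u k v : c = q ⊗ m ⊕ r -> m = r ⊕ ρ -> Q ⊗ u = k ⊗ m ⊕ oA ->
  c ⊕ Q ⊗ (u ⊗ (v ⊕ ρ)) = (q ⊕ k ⊗ (v ⊕ ρ) ⊕ oA) ⊗ m ⊕ v.
Proof.
  intros Hc Hm HQ. subst c.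
  transitivity (q ⊗ m ⊕ r ⊕ (Q ⊗ u) ⊗ (v ⊕ ρ)); [ring|]. rewrite HQ. subst m. ring.
Qed.

Lemma d_exists (G : Sc A) N :
  (forall i, i ≺ N -> exists v, mem A (pair A i v) G) ->
  (forall i v w, i ≺ N -> mem A (pair A i v) G -> mem A (pair A i w) G -> v = w) ->
  exists d, zA ≺ d /\ (forall j, zA ≺ j -> j ≼ N -> dv A j d) /\
    (forall i v, i ≺ N -> mem A (pair A i v) G -> v ≺ d).
Proof.
  intros Htot Hfun.
  cut (forall n, n ≼ N -> exists d, zA ≺ d /\ (forall j, zA ≺ j -> j ≼ n -> dv A j d) /\
    (forall i v, i ≺ n -> mem A (pair A i v) G -> v ≺ d)).
  { intro H. apply H. apply le_refl. }
  induct (fun A n (e : nat -> Mc A) (s : nat -> Sc A) =>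
    (lt A n (e 0) \/ n = e 0) -> exists d, lt A (zero A) d /\
    (forall j, lt A (zero A) j -> (lt A j n \/ j = n) -> exists k, d = mul A k j) /\
    (forall i v, lt A i n -> mem A (pair A i v) (s 0) -> lt A v d)) (e1 N) (s1 G).
  - intros _. exists oA. split; [|split].
    + rewrite <- (add0l oA). apply lt_0S.
    + intros j Hj [Hj'| Hj']; [exfalso; eapply not_lt0; eauto|subst; exfalso; eapply lt_irr; eauto].
    + intros i v Hi. exfalso; eapply not_lt0; eauto.
  - intros n IH HnN. change (n ⊕ oA ≼ N) in HnN.
    assert (HnN' : n ≺ N) by (apply lt_le_S; auto).
    destruct IH as [d [Hd0 [Hd1 Hd2]]]; [apply lt_le; auto|].
    destruct (Htot n HnN') as [vn Hvn].
    exists (d ⊗ (n ⊕ oA) ⊗ (vn ⊕ oA)). split; [|split].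
    + apply pos_mul; [apply pos_mul; auto|]; apply lt_0S.
    + intros j Hj Hjn. change (j ≼ n ⊕ oA) in Hjn. destruct Hjn as [Hjn| ->].
      * apply lt_succ_le in Hjn. destruct (Hd1 j Hj Hjn) as [k ->].
        exists (k ⊗ (n ⊕ oA) ⊗ (vn ⊕ oA)). ring.
      * exists (d ⊗ (vn ⊕ oA)). ring.
    + intros i v Hi Hv. apply lt_succ_le in Hi. destruct Hi as [Hi| ->].
      * eapply lt_le_trans; [apply (Hd2 i v Hi Hv)|].
        rewrite mulA. apply le_mul_pos. apply pos_mul; apply lt_0S.
      * rewrite (Hfun n v vn HnN' Hv Hvn).
        eapply lt_le_trans; [apply lt_S|]. rewrite mulC. apply le_mul_pos.
        apply pos_mul; auto. apply lt_0S.
Qed.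

Lemma crt (G : Sc A) N :
  (forall i, i ≺ N -> exists v, mem A (pair A i v) G) ->
  (forall i v w, i ≺ N -> mem A (pair A i v) G -> mem A (pair A i w) G -> v = w) ->
  exists x, len A x N /\ forall i v, i ≺ N -> mem A (pair A i v) G -> ent A x i v.
Proof.
  intros Htot Hfun.
  destruct (d_exists G N Htot Hfun) as [d [Hd0 [Hd1 Hd2]]].
  cut (forall n, n ≼ N -> exists c Q,
    (forall i v, i ≺ n -> mem A (pair A i v) G -> md A c (modu A d i) v) /\
    (forall i, i ≺ n -> dv A (modu A d i) Q) /\
    (forall j, n ≼ j -> j ≺ N -> exists u k, Q ⊗ u = k ⊗ modu A d j ⊕ oA)).
  { intro H. destruct (H N (le_refl N)) as [c [Q [H1 _]]].
    exists (pair A N (pair A c d)). split; [exists c, d; auto|].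
    intros i v Hi Hv. exists N, c, d. split; auto. }
  induct (fun A n (e : nat -> Mc A) (s : nat -> Sc A) =>
    (lt A n (e 0) \/ n = e 0) -> exists c Q,
    (forall i v, lt A i n -> mem A (pair A i v) (s 0) ->
       exists q, c = add A (mul A q (add A (one A) (mul A (add A i (one A)) (e 1)))) v /\
         lt A v (add A (one A) (mul A (add A i (one A)) (e 1)))) /\
    (forall i, lt A i n -> exists k, Q = mul A k (add A (one A) (mul A (add A i (one A)) (e 1)))) /\
    (forall j, (lt A n j \/ n = j) -> lt A j (e 0) -> exists u k,
       mul A Q u = add A (mul A k (add A (one A) (mul A (add A j (one A)) (e 1)))) (one A)))
    (e2 N d) (s1 G).
  - intros _. exists zA, oA. split; [|split].
    + intros i v Hi. exfalso; eapply not_lt0; eauto.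
    + intros i Hi. exfalso; eapply not_lt0; eauto.
    + intros j _ _. exists oA, zA. ring.
  - intros n IH HnN. change (n ⊕ oA ≼ N) in HnN.
    assert (HnN' : n ≺ N) by (apply lt_le_S; auto).
    destruct IH as [c [Q [Hc [HQ Hinv]]]]; [apply lt_le; auto|].
    fold (modu A d n) in *.
    change (forall i v, i ≺ n -> mem A (pair A i v) G -> md A c (modu A d i) v) in Hc.
    change (forall i, i ≺ n -> dv A (modu A d i) Q) in HQ.
    change (forall j, n ≼ j -> j ≺ N -> exists u k, Q ⊗ u = k ⊗ modu A d j ⊕ oA) in Hinv.
    change (exists c Q,
      (forall i v, i ≺ n ⊕ oA -> mem A (pair A i v) G -> md A c (modu A d i) v) /\
      (forall i, i ≺ n ⊕ oA -> dv A (modu A d i) Q) /\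
      (forall j, n ⊕ oA ≼ j -> j ≺ N -> exists u k, Q ⊗ u = k ⊗ modu A d j ⊕ oA)).
    destruct (Hinv n (le_refl n) HnN') as [un [kn Hun]].
    destruct (Htot n HnN') as [vn Hvn].
    destruct (divmod (modu A d n) c (modu_pos d n)) as [q [r [Hcq Hr]]].
    apply lt_ex in Hr. destruct Hr as [ρ' Hρ].
    set (ρ := ρ' ⊕ oA).
    exists (c ⊕ Q ⊗ (un ⊗ (vn ⊕ ρ))), (Q ⊗ modu A d n). split; [|split].
    + intros i v Hi Hv. apply lt_succ_le in Hi. destruct Hi as [Hi| ->].
      * destruct (HQ i Hi) as [ki ->].
        replace ((ki ⊗ modu A d i) ⊗ (un ⊗ (vn ⊕ ρ))) with ((ki ⊗ (un ⊗ (vn ⊕ ρ))) ⊗ modu A d i) by ring.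
        apply md_add. auto.
      * rewrite (Hfun n v vn HnN' Hv Hvn).
        exists (q ⊕ kn ⊗ (vn ⊕ ρ) ⊕ oA). split.
        -- apply crt_alg with (r := r); auto. unfold ρ. rewrite Hρ. ring.
        -- eapply lt_le_trans; [apply (Hd2 n vn HnN' Hvn)|]. unfold modu.
           apply le_ex. exists (oA ⊕ n ⊗ d). ring.
    + intros i Hi. apply lt_succ_le in Hi. destruct Hi as [Hi| ->].
      * destruct (HQ i Hi) as [ki ->]. exists (ki ⊗ modu A d n). ring.
      * exists Q. ring.
    + intros j Hj HjN. apply lt_le_S in Hj.
      destruct (Hinv j (lt_le _ _ Hj) HjN) as [u1 [k1 H1]].
      apply lt_ex in Hj. destruct Hj as [δ' Hj].
      assert (Hj' : j = n ⊕ (δ' ⊕ oA)) by (rewrite Hj; ring).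
      destruct (inv_mod d n (δ' ⊕ oA) (lt_0S δ')) as [u2 [k2 H2]]; auto.
      { apply Hd1; [apply lt_0S|]. apply lt_le. eapply le_lt_trans; [|apply HjN].
        rewrite Hj'. apply le_add_l. }
      rewrite <- Hj' in H2.
      exists (u1 ⊗ u2), (k1 ⊗ k2 ⊗ modu A d j ⊕ k1 ⊕ k2).
      transitivity ((Q ⊗ u1) ⊗ (modu A d n ⊗ u2)); [ring|]. rewrite H1, H2. ring.
Qed.
Ltac comp_get P e s := refine (comp_u P _ A HA e s); [sdef].

Lemma snoc x n v : len A x n -> exists x', len A x' (n ⊕ oA) /\
  (forall i w, i ≺ n -> ent A x i w -> ent A x' i w) /\ ent A x' n v.
Proof.
  intro Hx.
  destruct (comp_u (fun A z e s => exists i w, z = pair A i w /\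
     ((lt A i (e 1) /\ ent A (e 0) i w) \/ (i = e 1 /\ w = e 2))) ltac:(sdef) A HA (e3 x n v) (s1 X0))
    as [G HG]. unfold_env.
  assert (HG' : forall i w, mem A (pair A i w) G <-> (i ≺ n /\ ent A x i w) \/ (i = n /\ w = v)).
  { intros i w. rewrite HG. split.
    - intros [i' [w' [H1 H2]]]. apply pair_inj in H1. destruct H1; subst; auto.
    - intros H. exists i, w. auto. }
  destruct (crt G (n ⊕ oA)) as [x' [Hl He]].
  - intros i Hi. apply lt_succ_le in Hi. destruct Hi as [Hi| ->].
    + destruct (ent_ex x n i Hx) as [w Hw]. exists w. apply HG'. auto.
    + exists v. apply HG'. auto.
  - intros i w w' Hi H1 H2. apply HG' in H1. apply HG' in H2.
    destruct H1 as [[H1 H1']|[H1 H1']]; destruct H2 as [[H2 H2']|[H2 H2']]; subst.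
    + eapply ent_fun; eauto.
    + exfalso; eapply lt_irr; eauto.
    + exfalso; eapply lt_irr; eauto.
    + auto.
  - exists x'. split; auto. split.
    + intros i w Hi Hw. apply He; [eapply lt_trans; [apply Hi| apply lt_S]|]. apply HG'. auto.
    + apply He; [apply lt_S|]. apply HG'. auto.
Qed.

Lemma seqeq_sym x y : seqeq A x y -> seqeq A y x.
Proof.
  intros [n [Hx [Hy H]]]. exists n. split; auto. split; auto.
  intros i Hi v Hv. destruct (ent_ex x n i Hx) as [w Hw].
  rewrite (ent_fun y i v w Hv (H i Hi w Hw)). auto.
Qed.
Lemma seqeq_trans x y z : seqeq A x y -> seqeq A y z -> seqeq A x z.
Proof.
  intros [n [Hx [Hy H]]] [n' [Hy' [Hz H']]]. rewrite <- (len_fun y n n' Hy Hy') in *.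
  exists n. split; auto.
Qed.
Lemma seqeq_refl x n : len A x n -> seqeq A x x.
Proof. intros H. exists n. split; auto. Qed.

Lemma canon_ex x n : len A x n -> exists y, canon A y /\ seqeq A y x.
Proof.
  intro Hx.
  destruct (lnp (fun A y e s => seqeq A y (e 0)) ltac:(sdef) (e1 x) (s1 X0)) as [y [Hy Hmin]].
  { exists x. eapply seqeq_refl; eauto. }
  unfold_env. exists y. split; auto. split.
  - destruct Hy as [m [Hm _]]. eauto.
  - intros z Hz Hzy. apply (Hmin z Hz). eapply seqeq_trans; eauto.
Qed.

Lemma canon_uniq x y : canon A x -> canon A y -> seqeq A x y -> x = y.
Proof.
  intros [_ Hx] [_ Hy] H. destruct (lt_tri x y) as [H1|[H1|H1]]; auto.
  - exfalso. apply (Hy x H1 H).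
  - exfalso. apply (Hx y H1). apply seqeq_sym; auto.
Qed.

Ltac ltt := first [ assumption |
  match goal with H1 : lt A ?a ?b, H2 : lt A ?b ?c |- lt A ?a ?c => exact (lt_trans _ _ _ H1 H2) end |
  match goal with H1 : lt A ?a ?b, H2 : lt A ?b ?c, H3 : lt A ?c ?d |- lt A ?a ?d =>
     exact (lt_trans _ _ _ H1 (lt_trans _ _ _ H2 H3)) end ].

Lemma ent_sym x y i : (exists n, len A y n) -> (forall v, ent A y i v -> ent A x i v) ->
  forall v, ent A x i v -> ent A y i v.
Proof.
  intros [n Hn] H v Hv. destruct (ent_ex y n i Hn) as [w Hw].
  rewrite (ent_fun x i v w Hv (H w Hw)). auto.
Qed.

Lemma ent_same x y i v w : (forall u, ent A y i u -> ent A x i u) -> ent A x i v -> ent A y i w -> v = w.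
Proof. intros H Hv Hw. eapply ent_fun; eauto. Qed.

Lemma kb_irr x : ~ kb A x x.
Proof.
  intros [n [m [Hn [Hm [[H _]|[i [_ [_ [_ [v [w [Hv [Hw Hvw]]]]]]]]]]]]].
  - rewrite (len_fun x n m Hn Hm) in H. eapply lt_irr; eauto.
  - rewrite (ent_fun x i v w Hv Hw) in Hvw. eapply lt_irr; eauto.
Qed.

Lemma kb_trans x y z : kb A x y -> kb A y z -> kb A x z.
Proof.
  intros [nx [ny [Hx [Hy Hxy]]]] [ny' [nz [Hy' [Hz Hyz]]]].
  rewrite <- (len_fun y ny ny' Hy Hy') in *. clear ny' Hy'.
  exists nx, nz. split; auto. split; auto.
  destruct Hxy as [[Hl1 Ha1]|[i [Hi1 [Hi2 [Ha1 [v [w [Hv [Hw Hvw]]]]]]]]];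
  destruct Hyz as [[Hl2 Ha2]|[k [Hk1 [Hk2 [Ha2 [v' [w' [Hv' [Hw' Hvw']]]]]]]]].
  - left. split; [ltt|]. intros i v Hi Hv.
    apply Ha1; [ltt|]. apply Ha2; auto.
  - right. exists k. split; [ltt|]. split; auto. split.
    + intros j u Hj Hu. apply Ha1; [ltt|]. apply Ha2; auto.
    + exists v', w'. split; auto.
  - destruct (lt_tri i nz) as [Hiz|Hiz].
    + right. exists i. split; auto. split; auto. split.
      * intros j u Hj Hu. apply Ha1; auto. apply Ha2; auto. ltt.
      * exists v, w. split; [exact Hv|]. split; [|exact Hvw]. apply (ent_sym y z i); eauto.
    + left. assert (Hzi : nz ≼ i) by (destruct Hiz as [->|H]; [right; auto | left; auto]).
      split.
      * eapply le_lt_trans; [apply Hzi| apply Hi1].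
      * intros j u Hj Hu. apply Ha1. { eapply lt_le_trans; [apply Hj| apply Hzi]. }
        apply Ha2; auto.
  - right. destruct (lt_tri i k) as [Hik|[<-|Hik]].
    + exists i. refine (conj Hi1 (conj (lt_trans _ _ _ Hik Hk2) (conj _ _))).
      * intros j u Hj Hu. apply Ha1; [assumption|]. apply Ha2; [ltt|assumption].
      * exists v, w. split; [exact Hv|]. split; [|exact Hvw]. apply (ent_sym y z i); eauto.
    + exists i. refine (conj Hi1 (conj Hk2 (conj _ _))).
      * intros j u Hj Hu. apply Ha1; [assumption|]. apply Ha2; assumption.
      * exists v, w'. split; [exact Hv|]. split; [exact Hw'|].
        rewrite (ent_fun y i w v' Hw Hv') in Hvw. ltt.
    + exists k. refine (conj (lt_trans _ _ _ Hik Hi1) (conj Hk2 (conj _ _))).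
      * intros j u Hj Hu. apply Ha1; [ltt|]. apply Ha2; auto.
      * exists v', w'. split; [|split; auto]. apply Ha1; auto.
Qed.

Lemma kb_total x y : canon A x -> canon A y -> kb A x y \/ x = y \/ kb A y x.
Proof.
  intros Cx Cy. destruct Cx as [[n Hn] Cx']. destruct Cy as [[m Hm] Cy'].
  destruct (classic (exists i, i ≺ n /\ i ≺ m /\ ~ (forall v, ent A y i v -> ent A x i v))) as [Hd|Hd].
  - destruct (lnp (fun A i e s => lt A i (e 0) /\ lt A i (e 1) /\ ~ (forall v, ent A (e 3) i v -> ent A (e 2) i v))
       ltac:(sdef) (e4 n m x y) (s1 X0) Hd) as [i [[Hi1 [Hi2 Hi3]] Hmin]].
    unfold_env.
    assert (Hag : forall j v, j ≺ i -> ent A y j v -> ent A x j v).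
    { intros j v Hj Hv. apply NNPP. intro Hc. apply (Hmin j Hj). split; [ltt|].
      split; [ltt|]. intro H. apply Hc. apply H. auto. }
    destruct (ent_ex x n i Hn) as [v Hv]. destruct (ent_ex y m i Hm) as [w Hw].
    assert (Hne : v <> w).
    { intros <-. apply Hi3. intros u Hu. rewrite (ent_fun y i u v Hu Hw). auto. }
    destruct (lt_tri v w) as [Hvw|[Hvw|Hvw]]; [|tauto|].
    + left. exists n, m. split; auto. split; auto. right. exists i. split; auto. split; auto. split; auto.
      exists v, w. auto.
    + right; right. exists m, n. split; auto. split; auto. right. exists i. split; auto. split; auto. split.
      * intros j u Hj Hu. apply (ent_sym x y j); eauto.
      * exists w, v. auto.
  - assert (Hag : forall j v, j ≺ n -> j ≺ m -> ent A y j v -> ent A x j v).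
    { intros j v Hj1 Hj2 Hv. apply NNPP. intro Hc. apply Hd. exists j.
      refine (conj Hj1 (conj Hj2 _)). intro H. apply Hc. apply H. auto. }
    destruct (lt_tri n m) as [Hnm|[<-|Hnm]].
    + right; right. exists m, n. split; auto. split; auto. left. split; auto.
      intros j u Hj Hu. apply (ent_sym x y j); eauto. intros u' Hu'. apply Hag; auto.
      ltt.
    + right; left. apply canon_uniq; try (split; eauto).
      exists n. split; auto. split; auto. intros j Hj u Hu. apply (ent_sym x y j); eauto.
    + left. exists n, m. split; auto. split; auto. left. split; auto.
      intros j u Hj Hu. apply Hag; auto. ltt.
Qed.

Lemma desc_comp D1 R1 D2 R2 : DescSeq A D1 R1 -> Embedding A D1 R1 D2 R2 -> DescSeq A D2 R2.
Proof.
  intros [Fa [HA1 [HA2 HA3]]] [FE [HE1 [HE2 HE3]]].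
  destruct (comp_u (fun A z e s => exists n y, z = pair A n y /\ exists a,
     mem A (pair A n a) (s 0) /\ mem A (pair A a y) (s 1)) ltac:(sdef) A HA (e1 zA) (s2 Fa FE))
    as [F HF]. unfold_env.
  assert (HF' : forall n y, mem A (pair A n y) F <-> exists a, mem A (pair A n a) Fa /\ mem A (pair A a y) FE).
  { intros n y. rewrite HF. split.
    - intros [n' [y' [E H]]]. apply pair_inj in E. destruct E; subst. auto.
    - intros H. exists n, y. auto. }
  assert (Hin : forall n a, mem A (pair A n a) Fa -> mem A a D1).
  { intros n a H. destruct (HA1 n) as [m [Hm1 Hm2]]. rewrite (HA2 _ _ _ H Hm1). auto. }
  exists F. split; [|split].
  - intros n. destruct (HA1 n) as [a [Ha1 Ha2]]. destruct (HE1 a Ha2) as [y [Hy1 Hy2]].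
    exists y. split; auto. apply HF'. eauto.
  - intros n y y' H1 H2. apply HF' in H1. apply HF' in H2.
    destruct H1 as [a [Ha Hy]]. destruct H2 as [a' [Ha' Hy']].
    rewrite (HA2 _ _ _ Ha Ha') in Hy. exact (HE2 a' y y' (Hin _ _ Ha') Hy Hy').
  - intros n y y' H1 H2. apply HF' in H1. apply HF' in H2.
    destruct H1 as [a [Ha Hy]]. destruct H2 as [a' [Ha' Hy']].
    exact (HE3 a' a y' y (Hin _ _ Ha') (Hin _ _ Ha) Hy' Hy (HA3 _ _ _ Ha Ha')).
Qed.

Section Tree.
Variables Da Ra Db Rb Dd Rd : Sc A.
Hypothesis hD : forall x, mem A x Dd <-> node A Da Ra Db Rb x.
Hypothesis hR : forall z, mem A z Rd <-> exists x y, z = pair A x y /\ node A Da Ra Db Rb x /\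
   node A Da Ra Db Rb y /\ kb A x y.
Local Notation nd := (node A Da Ra Db Rb).

Lemma hR' x y : mem A (pair A x y) Rd <-> nd x /\ nd y /\ kb A x y.
Proof.
  rewrite hR. split.
  - intros [x' [y' [H1 H2]]]. apply pair_inj in H1. destruct H1; subst. auto.
  - intros H. exists x, y. auto.
Qed.

Lemma L_IsLO : IsLO A Dd Rd.
Proof.
  split; [|split; [|split]].
  - intros x y H. apply hR' in H. rewrite !hD. tauto.
  - intros x H. apply hR' in H. eapply kb_irr. apply H.
  - intros x y z H1 H2. apply hR' in H1. apply hR' in H2. apply hR'.
    split; [tauto|]. split; [tauto|]. eapply kb_trans; [apply H1|apply H2].
  - intros x y Hx Hy. apply hD in Hx. apply hD in Hy.
    destruct (kb_total x y (proj1 Hx) (proj1 Hy)) as [H|[H|H]].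
    + left. apply hR'. auto.
    + right; left. auto.
    + right; right. apply hR'. auto.
Qed.

Section Path.
Variable F : Sc A.
Hypothesis HF1 : forall n, exists m, mem A (pair A n m) F /\ mem A m Dd.
Hypothesis HF2 : forall n m m', mem A (pair A n m) F -> mem A (pair A n m') F -> m = m'.
Hypothesis HF3 : forall n m m', mem A (pair A n m) F -> mem A (pair A (n ⊕ oA) m') F ->
        mem A (pair A m' m) Rd.

Lemma Fnode n x : mem A (pair A n x) F -> nd x.
Proof.
  intro H. destruct (HF1 n) as [m [Hm1 Hm2]]. rewrite (HF2 n x m H Hm1). apply hD. auto.
Qed.
Lemma Fdesc n x y : mem A (pair A n x) F -> mem A (pair A (n ⊕ oA) y) F -> kb A y x.
Proof. intros H1 H2. apply (hR' y x). eapply HF3; eauto. Qed.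

Lemma chain n k : forall x y, mem A (pair A n x) F -> mem A (pair A (n ⊕ k ⊕ oA) y) F -> kb A y x.
Proof.
  revert k. induct (fun A k (e : nat -> Mc A) (s : nat -> Sc A) => forall x y,
     mem A (pair A (e 0) x) (s 0) -> mem A (pair A (add A (add A (e 0) k) (one A)) y) (s 0) -> kb A y x)
    (e1 n) (s1 F).
  - intros x y H1 H2. rewrite ax_add0 in H2. eapply Fdesc; eauto.
  - intros k IH x y H1 H2. destruct (HF1 (n ⊕ k ⊕ oA)) as [z [Hz _]].
    eapply kb_trans; [|apply (IH x z H1 Hz)]. eapply Fdesc; [apply Hz|].
    replace (n ⊕ k ⊕ oA ⊕ oA) with (n ⊕ (k ⊕ oA) ⊕ oA) by ring. auto.
Qed.

Lemma chain' n n' x y : n ≺ n' -> mem A (pair A n x) F -> mem A (pair A n' y) F -> kb A y x.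
Proof. intros H. apply lt_ex in H. destruct H as [k ->]. apply chain. Qed.

Definition Stab (k : M) := exists N, forall n x n' x', N ≼ n -> N ≼ n' ->
   mem A (pair A n x) F -> mem A (pair A n' x') F ->
   (forall l, len A x l -> k ≼ l) /\ forall j v, j ≺ k -> ent A x' j v -> ent A x j v.

Lemma kb_agree_lt x y k l m :
  kb A x y -> len A x l -> len A y m -> k ≼ m ->
  (forall j v, j ≺ k -> ent A y j v -> ent A x j v) ->
  (forall j v, j ≺ k -> ent A x j v -> ent A y j v) ->
  (m ≺ l /\ forall i v, i ≺ m -> ent A y i v -> ent A x i v) \/
  (exists i, k ≼ i /\ i ≺ l /\ i ≺ m /\ (forall j v, j ≺ i -> ent A y j v -> ent A x j v) /\
       exists v w, ent A x i v /\ ent A y i w /\ v ≺ w).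
Proof.
  intros [l' [m' [Hl' [Hm' H]]]] Hl Hm Hkm Hag1 Hag2.
  rewrite (len_fun x l' l Hl' Hl), (len_fun y m' m Hm' Hm) in H.
  destruct H as [H|[i [Hi1 [Hi2 [Hi3 [v [w [Hv [Hw Hvw]]]]]]]]]; [left; auto|right].
  exists i. refine (conj _ (conj Hi1 (conj Hi2 (conj Hi3 _)))); [|exists v, w; auto].
  apply not_lt. intro Hik. apply (lt_irr v). rewrite (ent_fun x i v w Hv (Hag1 i w Hik Hw)) at 2.
  auto.
Qed.

Lemma stab k : Stab k.
Proof.
  revert k. unfold Stab.
  induct (fun A k (e : nat -> Mc A) (s : nat -> Sc A) => exists N, forall n x n' x',
     (lt A N n \/ N = n) -> (lt A N n' \/ N = n') ->
     mem A (pair A n x) (s 0) -> mem A (pair A n' x') (s 0) ->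
     (forall l, len A x l -> lt A k l \/ k = l) /\
     forall j v, lt A j k -> ent A x' j v -> ent A x j v) (e1 zA) (s1 F).
  - exists zA. intros n x n' x' _ _ _ _. split.
    + intros l _. apply le_0.
    + intros j v Hj. exfalso. eapply not_lt0; eauto.
  - intros k [N HN].
    change (forall n x n' x', N ≼ n -> N ≼ n' -> mem A (pair A n x) F -> mem A (pair A n' x') F ->
       (forall l, len A x l -> k ≼ l) /\ forall j v, j ≺ k -> ent A x' j v -> ent A x j v) in HN.
    change (exists N, forall n x n' x', N ≼ n -> N ≼ n' -> mem A (pair A n x) F -> mem A (pair A n' x') F ->
       (forall l, len A x l -> k ⊕ oA ≼ l) /\ forall j v, j ≺ k ⊕ oA -> ent A x' j v -> ent A x j v).
    assert (HA1 : exists N1, N ≼ N1 /\ forall n x l, N1 ≼ n -> mem A (pair A n x) F -> len A x l -> k ≺ l).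
    { destruct (classic (exists n0 x0, N ≼ n0 /\ mem A (pair A n0 x0) F /\ len A x0 k)) as
        [[n0 [x0 [Hn0 [Hx0 Hl0]]]]|Hno].
      - exists (n0 ⊕ oA). split; [eapply le_trans; [apply Hn0|]; left; apply lt_S|].
        intros n x l Hn Hx Hl. apply lt_le_S in Hn.
        assert (HNn : N ≼ n) by (eapply le_trans; [apply Hn0| left; auto]).
        destruct (HN n x n0 x0 HNn Hn0 Hx Hx0) as [_ Hag1].
        destruct (HN n0 x0 n x Hn0 HNn Hx0 Hx) as [_ Hag2].
        destruct (kb_agree_lt x x0 k l k (chain' n0 n x0 x Hn Hx0 Hx) Hl Hl0 (le_refl k) Hag1 Hag2)
          as [[H _]|[i [Hi1 [_ [Hi2 _]]]]]; auto.
        exfalso. eapply le_not_lt; eauto.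
      - exists N. split; [apply le_refl|]. intros n x l Hn Hx Hl.
        destruct (HN n x n x Hn Hn Hx Hx) as [Hk _]. destruct (Hk l Hl) as [H| <-]; auto.
        exfalso. apply Hno. exists n, x. auto. }
    destruct HA1 as [N1 [HN1 HA1]].
    destruct (HF1 N1) as [x1 [Hx1 _]].
    destruct (Fnode N1 x1 Hx1) as [[[l1 Hl1] _] _].
    destruct (ent_ex x1 l1 k Hl1) as [w1 Hw1].
    destruct (lnp (fun A w e s => exists n x, (lt A (e 0) n \/ e 0 = n) /\ mem A (pair A n x) (s 0) /\
        ent A x (e 1) w) ltac:(sdef) (e2 N1 k) (s1 F)) as [w0 [[n0 [x0 [Hn0 [Hx0 Hw0]]]] Hmin]].
    { exists w1, N1, x1. unfold_env. split; [right; auto|]. auto. }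
    unfold_env.
    assert (HC : forall n x, n0 ≼ n -> mem A (pair A n x) F -> ent A x k w0).
    { intros n x Hn Hx. destruct Hn as [Hn| <-]; [|rewrite (HF2 n0 x x0 Hx Hx0); auto].
      assert (HNn0 : N ≼ n0) by (eapply le_trans; eauto).
      assert (HNn : N ≼ n) by (eapply le_trans; [apply HNn0|left; auto]).
      destruct (HN n x n0 x0 HNn HNn0 Hx Hx0) as [_ Hag1].
      destruct (HN n0 x0 n x HNn0 HNn Hx0 Hx) as [_ Hag2].
      destruct (Fnode n x Hx) as [[[l Hl] _] _].
      destruct (Fnode n0 x0 Hx0) as [[[l0 Hl0] _] _].
      assert (Hkl0 : k ≺ l0) by (eapply HA1; [apply Hn0|apply Hx0|apply Hl0]).
      destruct (kb_agree_lt x x0 k l l0 (chain' n0 n x0 x Hn Hx0 Hx) Hl Hl0 (lt_le _ _ Hkl0) Hag1 Hag2)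
        as [[_ H]|[i [Hi1 [Hi2 [Hi3 [Hi4 [v [w [Hv [Hw Hvw]]]]]]]]]].
      - apply H; auto.
      - destruct Hi1 as [Hki| <-].
        + apply Hi4; auto.
        + rewrite (ent_fun x0 k w w0 Hw Hw0) in Hvw. exfalso. apply (Hmin v Hvw).
          exists n, x. split; [|split; auto]. apply le_trans with n0; auto. left; auto. }
    exists n0. intros n x n' x' Hn Hn' Hx Hx'. split.
    + intros l Hl. apply lt_le_S. eapply HA1; [|apply Hx|apply Hl]. eapply le_trans; eauto.
    + intros j v Hj Hv. apply lt_succ_le in Hj. destruct Hj as [Hj| ->].
      * assert (HNn0 : N ≼ n0) by (eapply le_trans; eauto).
        eapply (HN n x n' x'); eauto; eapply le_trans; eauto.
      * rewrite (ent_fun x' k v w0 Hv (HC n' x' Hn' Hx')). apply (HC n x Hn Hx).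
Qed.

Lemma le3_1 a b c : a ≼ a ⊕ b ⊕ c. Proof. apply le_ex. exists (b ⊕ c). ring. Qed.
Lemma le3_2 a b c : b ≼ a ⊕ b ⊕ c. Proof. apply le_ex. exists (a ⊕ c). ring. Qed.
Lemma le3_3 a b c : c ≼ a ⊕ b ⊕ c. Proof. apply le_ex. exists (a ⊕ b). ring. Qed.

Lemma path_alpha : DescSeq A Da Ra.
Proof.
  destruct (comp_u (fun A z e s => exists k a, z = pair A k a /\ exists N, forall n x,
     (lt A N n \/ N = n) -> mem A (pair A n x) (s 0) -> exists b, ent A x k (pair A a b))
     ltac:(sdef) A HA (e1 zA) (s1 F)) as [P HP]. unfold_env.
  assert (HP' : forall k a, mem A (pair A k a) P <-> exists N, forall n x, N ≼ n ->
     mem A (pair A n x) F -> exists b, ent A x k (pair A a b)).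
  { intros k a. rewrite HP. split.
    - intros [k' [a' [H1 H2]]]. apply pair_inj in H1. destruct H1; subst. auto.
    - intros H. exists k, a. auto. }
  exists P. split; [|split].
  - intro k. destruct (stab (k ⊕ oA)) as [N HN]. destruct (HF1 N) as [xN [HxN _]].
    destruct (Fnode N xN HxN) as [_ [l [Hl [_ [Hent _]]]]].
    destruct (HN N xN N xN (le_refl N) (le_refl N) HxN HxN) as [Hlen _].
    assert (Hkl : k ≺ l) by (apply lt_le_S; apply Hlen; auto).
    destruct (ent_ex xN l k Hl) as [v Hv].
    destruct (Hent k v Hkl Hv) as [a [b [-> [Ha Hb]]]].
    exists a. split; auto. apply HP'. exists N. intros n x Hn Hx. exists b.
    destruct (HN n x N xN Hn (le_refl N) Hx HxN) as [_ Hag]. apply Hag; auto. apply lt_S.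
  - intros k a a' H1 H2. apply HP' in H1. apply HP' in H2.
    destruct H1 as [N1 H1]. destruct H2 as [N2 H2].
    destruct (HF1 (N1 ⊕ N2 ⊕ zA)) as [x [Hx _]].
    destruct (H1 _ x (le3_1 N1 N2 zA) Hx) as [b Hb]. destruct (H2 _ x (le3_2 N1 N2 zA) Hx) as [b' Hb'].
    pose proof (ent_fun _ _ _ _ Hb Hb') as H. apply pair_inj in H. tauto.
  - intros k a a' H1 H2. apply HP' in H1. apply HP' in H2.
    destruct H1 as [N1 H1]. destruct H2 as [N2 H2].
    destruct (stab (k ⊕ oA ⊕ oA)) as [N3 HN3].
    destruct (HF1 (N1 ⊕ N2 ⊕ N3)) as [x [Hx _]].
    destruct (H1 _ x (le3_1 N1 N2 N3) Hx) as [b Hb]. destruct (H2 _ x (le3_2 N1 N2 N3) Hx) as [b' Hb'].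
    destruct (Fnode _ x Hx) as [_ [l [Hl [_ [_ Hcons]]]]].
    destruct (HN3 _ x _ x (le3_3 N1 N2 N3) (le3_3 N1 N2 N3) Hx Hx) as [Hlen _].
    assert (Hkl : k ⊕ oA ≺ l) by (apply lt_le_S; apply Hlen; auto).
    destruct (Hcons k _ _ Hkl Hb Hb') as [a0 [b0 [a0' [b0' [E1 [E2 [Ha _]]]]]]].
    apply pair_inj in E1. apply pair_inj in E2. destruct E1, E2; subst. auto.
Qed.

Lemma path_beta : DescSeq A Db Rb.
Proof.
  destruct (comp_u (fun A z e s => exists k b, z = pair A k b /\ exists N, forall n x,
     (lt A N n \/ N = n) -> mem A (pair A n x) (s 0) -> exists a, ent A x k (pair A a b))
     ltac:(sdef) A HA (e1 zA) (s1 F)) as [P HP]. unfold_env.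
  assert (HP' : forall k b, mem A (pair A k b) P <-> exists N, forall n x, N ≼ n ->
     mem A (pair A n x) F -> exists a, ent A x k (pair A a b)).
  { intros k b. rewrite HP. split.
    - intros [k' [b' [H1 H2]]]. apply pair_inj in H1. destruct H1; subst. auto.
    - intros H. exists k, b. auto. }
  exists P. split; [|split].
  - intro k. destruct (stab (k ⊕ oA)) as [N HN]. destruct (HF1 N) as [xN [HxN _]].
    destruct (Fnode N xN HxN) as [_ [l [Hl [_ [Hent _]]]]].
    destruct (HN N xN N xN (le_refl N) (le_refl N) HxN HxN) as [Hlen _].
    assert (Hkl : k ≺ l) by (apply lt_le_S; apply Hlen; auto).
    destruct (ent_ex xN l k Hl) as [v Hv].
    destruct (Hent k v Hkl Hv) as [a [b [-> [Ha Hb]]]].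
    exists b. split; auto. apply HP'. exists N. intros n x Hn Hx. exists a.
    destruct (HN n x N xN Hn (le_refl N) Hx HxN) as [_ Hag]. apply Hag; auto. apply lt_S.
  - intros k a a' H1 H2. apply HP' in H1. apply HP' in H2.
    destruct H1 as [N1 H1]. destruct H2 as [N2 H2].
    destruct (HF1 (N1 ⊕ N2 ⊕ zA)) as [x [Hx _]].
    destruct (H1 _ x (le3_1 N1 N2 zA) Hx) as [b Hb]. destruct (H2 _ x (le3_2 N1 N2 zA) Hx) as [b' Hb'].
    pose proof (ent_fun _ _ _ _ Hb Hb') as H. apply pair_inj in H. tauto.
  - intros k a a' H1 H2. apply HP' in H1. apply HP' in H2.
    destruct H1 as [N1 H1]. destruct H2 as [N2 H2].
    destruct (stab (k ⊕ oA ⊕ oA)) as [N3 HN3].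
    destruct (HF1 (N1 ⊕ N2 ⊕ N3)) as [x [Hx _]].
    destruct (H1 _ x (le3_1 N1 N2 N3) Hx) as [b Hb]. destruct (H2 _ x (le3_2 N1 N2 N3) Hx) as [b' Hb'].
    destruct (Fnode _ x Hx) as [_ [l [Hl [_ [_ Hcons]]]]].
    destruct (HN3 _ x _ x (le3_3 N1 N2 N3) (le3_3 N1 N2 N3) Hx Hx) as [Hlen _].
    assert (Hkl : k ⊕ oA ≺ l) by (apply lt_le_S; apply Hlen; auto).
    destruct (Hcons k _ _ Hkl Hb Hb') as [a0 [b0 [a0' [b0' [E1 [E2 [_ Hbb]]]]]]].
    apply pair_inj in E1. apply pair_inj in E2. destruct E1, E2; subst. auto.
Qed.

End Path.
Section Emb.
Hypothesis HLa : IsLO A Da Ra.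
Variable Fb : Sc A.
Hypothesis HB1 : forall n, exists m, mem A (pair A n m) Fb /\ mem A m Db.
Hypothesis HB2 : forall n m m', mem A (pair A n m) Fb -> mem A (pair A n m') Fb -> m = m'.
Hypothesis HB3 : forall n m m', mem A (pair A n m) Fb -> mem A (pair A (n ⊕ oA) m') Fb ->
        mem A (pair A m' m) Rb.

Local Notation rc := (recd A Da Ra).
Local Notation em := (emb A Da Ra Fb).

Lemma Ra_irr x : ~ mem A (pair A x x) Ra. Proof. apply HLa. Qed.
Lemma Ra_trans x y z : mem A (pair A x y) Ra -> mem A (pair A y z) Ra -> mem A (pair A x z) Ra.
Proof. apply HLa. Qed.
Lemma Ra_tot x y : mem A x Da -> mem A y Da -> mem A (pair A x y) Ra \/ x = y \/ mem A (pair A y x) Ra.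
Proof. apply HLa. Qed.
Lemma Ra_asym x y : mem A (pair A x y) Ra -> ~ mem A (pair A y x) Ra.
Proof. intros H1 H2. apply (Ra_irr x). eapply Ra_trans; eauto. Qed.

Lemma rec_le a y : mem A a Da -> rc a y -> y ≼ a.
Proof.
  intros Ha [Hy [Hay Hmin]]. apply not_lt. intro H.
  pose proof (Hmin a H Ha (or_introl eq_refl)) as H1.
  destruct Hay as [->|H2]; [eapply Ra_irr; eauto| eapply Ra_asym; eauto].
Qed.

Lemma rec_self a : mem A a Da -> rc a a.
Proof.
  intros Ha. split; auto. split; [left; auto|]. intros z Hz _ [->|H]; auto.
  exfalso; eapply lt_irr; eauto.
Qed.

Lemma Fb_in n b : mem A (pair A n b) Fb -> mem A b Db.
Proof. intros H. destruct (HB1 n) as [m [Hm1 Hm2]]. rewrite (HB2 _ _ _ H Hm1). auto. Qed.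

Lemma enum_ex a : mem A a Da -> forall N, exists x n, len A x n /\
  (forall i v, i ≺ n -> ent A x i v -> exists r b, v = pair A r b /\ mem A (pair A i b) Fb /\ rc a r /\ r ≺ N) /\
  (forall i v w, i ⊕ oA ≺ n -> ent A x i v -> ent A x (i ⊕ oA) w ->
     exists r b r' b', v = pair A r b /\ w = pair A r' b' /\ r ≺ r') /\
  (forall y, y ≺ N -> rc a y -> exists i b, i ≺ n /\ ent A x i (pair A y b)).
Proof.
  intro Ha.
  induct (fun A N (e : nat -> Mc A) (s : nat -> Sc A) => exists x n, len A x n /\
  (forall i v, lt A i n -> ent A x i v -> exists r b, v = pair A r b /\ mem A (pair A i b) (s 2) /\
      recd A (s 0) (s 1) (e 0) r /\ lt A r N) /\
  (forall i v w, lt A (add A i (one A)) n -> ent A x i v -> ent A x (add A i (one A)) w ->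
     exists r b r' b', v = pair A r b /\ w = pair A r' b' /\ lt A r r') /\
  (forall y, lt A y N -> recd A (s 0) (s 1) (e 0) y -> exists i b, lt A i n /\ ent A x i (pair A y b)))
  (e1 a) (s3 Da Ra Fb).
  - exists (pair A zA (pair A zA zA)), zA. split; [exists zA, zA; auto|]. split; [|split].
    + intros i v Hi. exfalso; eapply not_lt0; eauto.
    + intros i v w Hi. exfalso; eapply not_lt0; eauto.
    + intros y Hy. exfalso; eapply not_lt0; eauto.
  - intros N [x [n [Hl [Hent [Hinc Hcov]]]]].
    destruct (classic (rc a N)) as [HN|HN].
    + destruct (HB1 n) as [bn [Hbn _]].
      destruct (snoc x n (pair A N bn) Hl) as [x' [Hl' [Hold Hnew]]].
      assert (Hold' : forall i v, i ≺ n -> ent A x' i v -> ent A x i v).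
      { intros i v Hi Hv. destruct (ent_ex x n i Hl) as [w Hw].
        rewrite (ent_fun x' i v w Hv (Hold i w Hi Hw)). auto. }
      exists x', (n ⊕ oA). split; auto. split; [|split].
      * intros i v Hi Hv. apply lt_succ_le in Hi. destruct Hi as [Hi| ->].
        -- destruct (Hent i v Hi (Hold' i v Hi Hv)) as [r [b [-> [Hb [Hr HrN]]]]].
           exists r, b. split; auto. split; auto. split; auto. eapply lt_trans; [apply HrN| apply lt_S].
        -- rewrite (ent_fun x' n v _ Hv Hnew). exists N, bn. split; auto. split; auto. split; auto. apply lt_S.
      * intros i v w Hi Hv Hw. apply lt_succ_le in Hi. destruct Hi as [Hi| Hi].
        -- apply (Hinc i v w Hi).
           ++ apply Hold'; [eapply lt_trans; [apply lt_S|apply Hi]| exact Hv].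
           ++ apply Hold'; [exact Hi| exact Hw].
        -- rewrite Hi in Hw. rewrite (ent_fun x' n w _ Hw Hnew).
           assert (Hin : i ≺ n) by (rewrite <- Hi; apply lt_S).
           destruct (Hent i v Hin (Hold' i v Hin Hv)) as [r [b [-> [_ [_ HrN]]]]].
           exists r, b, N, bn. auto.
      * intros y Hy Hry. apply lt_succ_le in Hy. destruct Hy as [Hy| ->].
        -- destruct (Hcov y Hy Hry) as [i [b [Hi Hib]]]. exists i, b. split; [eapply lt_trans; [apply Hi|apply lt_S]|].
           apply Hold; auto.
        -- exists n, bn. split; auto. apply lt_S.
    + exists x, n. split; auto. split; [|split]; auto.
      * intros i v Hi Hv. destruct (Hent i v Hi Hv) as [r [b [-> [Hb [Hr HrN]]]]].
        exists r, b. split; auto. split; auto. split; auto. eapply lt_trans; [apply HrN| apply lt_S].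
      * intros y Hy Hry. apply lt_succ_le in Hy. destruct Hy as [Hy| ->]; [auto| tauto].
Qed.

Lemma emb_ex a : mem A a Da -> exists x, em a x.
Proof.
  intros Ha. destruct (enum_ex a Ha (a ⊕ oA)) as [x [n [Hl [Hent [Hinc Hcov]]]]].
  exists x, n. split; auto. split; [|split]; auto.
  - intros i v Hi Hv. destruct (Hent i v Hi Hv) as [r [b [? [? [? _]]]]]. exists r, b. auto.
  - intros y Hy. apply Hcov; auto. apply lt_succ_le. apply rec_le; auto.
Qed.

Lemma emb_seqeq a x y : seqeq A y x -> em a x -> em a y.
Proof.
  intros Hs [n [Hl [Hent [Hinc Hcov]]]].
  destruct Hs as [n' [Hy [Hx Hyx]]]. rewrite (len_fun x n' n Hx Hl) in *.
  assert (Hxy : forall i v, i ≺ n -> ent A x i v -> ent A y i v).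
  { intros i v Hi. apply (ent_sym x y i); eauto. }
  exists n. split; auto. split; [|split].
  - intros i v Hi Hv. apply Hent; auto.
  - intros i v w Hi Hv Hw. apply (Hinc i v w Hi).
    + apply Hyx; [eapply lt_trans; [apply lt_S|apply Hi]|exact Hv].
    + apply Hyx; [exact Hi|exact Hw].
  - intros z Hz. destruct (Hcov z Hz) as [i [b [Hi Hib]]]. exists i, b. auto.
Qed.

Lemma emb_entry a x n i : em a x -> len A x n -> i ≺ n ->
  exists r b, ent A x i (pair A r b) /\ mem A (pair A i b) Fb /\ rc a r.
Proof.
  intros [n' [Hl' [Hent _]]] Hl Hi. rewrite (len_fun x n' n Hl' Hl) in Hent.
  destruct (ent_ex x n i Hl) as [v Hv]. destruct (Hent i v Hi Hv) as [r [b [-> [Hb Hr]]]].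
  exists r, b. auto.
Qed.

Lemma emb_mono a x n : em a x -> len A x n -> forall i j r r' b b', i ≺ j -> j ≺ n ->
  ent A x i (pair A r b) -> ent A x j (pair A r' b') -> r ≺ r'.
Proof.
  intros Hem Hl. pose proof Hem as [n' [Hl' [Hent [Hinc Hcov]]]]. rewrite (len_fun x n' n Hl' Hl) in *.
  assert (H : forall k i r r' b b', i ⊕ k ⊕ oA ≺ n -> ent A x i (pair A r b) ->
     ent A x (i ⊕ k ⊕ oA) (pair A r' b') -> r ≺ r').
  { induct (fun A k (e : nat -> Mc A) (s : nat -> Sc A) => forall i r r' b b',
       lt A (add A (add A i k) (one A)) (e 1) -> ent A (e 0) i (pair A r b) ->
       ent A (e 0) (add A (add A i k) (one A)) (pair A r' b') -> lt A r r') (e2 x n) (s1 X0).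
    - intros i r r' b b' Hi Hv Hw. rewrite ax_add0 in *.
      destruct (Hinc i _ _ Hi Hv Hw) as [r1 [b1 [r2 [b2 [E1 [E2 Hr]]]]]].
      apply pair_inj in E1. apply pair_inj in E2. destruct E1, E2; subst. auto.
    - intros k IH i r r' b b' Hi Hv Hw.
      assert (Hj : i ⊕ k ⊕ oA ≺ n) by (eapply lt_trans; [apply lt_S|]; replace (i ⊕ k ⊕ oA ⊕ oA) with (i ⊕ (k ⊕ oA) ⊕ oA) by ring; auto).
      destruct (emb_entry a x n (i ⊕ k ⊕ oA) Hem Hl Hj) as [r'' [b'' [Hv'' _]]].
      pose proof (IH i r r'' b b'' Hj Hv Hv'') as H1.
      replace (i ⊕ (k ⊕ oA) ⊕ oA) with (i ⊕ k ⊕ oA ⊕ oA) in * by ring.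
      destruct (Hinc _ _ _ Hi Hv'' Hw) as [r1 [b1 [r2 [b2 [E1 [E2 Hr]]]]]].
      apply pair_inj in E1. apply pair_inj in E2. destruct E1, E2; subst. eapply lt_trans; eauto. }
  intros i j r r' b b' Hij Hj Hv Hw. apply lt_ex in Hij. destruct Hij as [k ->]. eapply H; eauto.
Qed.

Lemma emb_order a a' x x' : mem A a Da -> mem A a' Da -> mem A (pair A a a') Ra ->
  em a x -> em a' x' -> kb A x x'.
Proof.
  intros Ha Ha' Haa' Hx Hx'.
  pose proof Hx as [n [Hl [Hent [Hinc Hcov]]]].
  pose proof Hx' as [n' [Hl' [Hent' [Hinc' Hcov']]]].
  destruct (lnp (fun A y e s => mem A y (s 0) /\ leo A (s 1) (e 0) y /\ mem A (pair A y (e 1)) (s 1))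
     ltac:(sdef) (e2 a a') (s2 Da Ra)) as [t [[Ht1 [Ht2 Ht3]] Hmin]].
  { exists a. unfold_env. split; auto. split; auto. left; auto. }
  unfold_env.
  assert (F1 : forall z, z ≺ t -> mem A z Da -> (leo A Ra a z <-> leo A Ra a' z)).
  { intros z Hz HzD. split.
    - intros Haz. destruct (Ra_tot z a' HzD Ha') as [H|[H|H]].
      + exfalso. apply (Hmin z Hz). auto.
      + left; auto.
      + right; auto.
    - intros [<-|H]; right; auto. eapply Ra_trans; eauto. }
  assert (F2 : forall y, y ≺ t -> (rc a y <-> rc a' y)).
  { intros y Hy. split.
    - intros [H1 [H2 H3]]. split; auto. split; [apply F1; auto|].
      intros z Hz HzD Hz'. apply H3; auto. apply F1; auto. eapply lt_trans; eauto.
    - intros [H1 [H2 H3]]. split; auto. split; [apply F1; auto|].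
      intros z Hz HzD Hz'. apply H3; auto. apply F1; auto. eapply lt_trans; eauto. }
  assert (F3 : rc a t).
  { split; auto. split; auto. intros z Hz HzD Haz. apply F1 in Haz; auto.
    destruct Haz as [<-|H]; auto. eapply Ra_trans; eauto. }
  assert (F4 : ~ rc a' t).
  { intros [_ [[<-|H] _]]; [eapply Ra_irr; eauto| eapply Ra_asym; eauto]. }
  destruct (Hcov t F3) as [it [bt [Hit Hbt]]].
  assert (HC : forall j, j ≺ it -> j ≺ n' /\ forall v, ent A x j v -> ent A x' j v).
  { cut (forall m j, j ≺ m -> j ≺ it -> j ≺ n' /\ forall v, ent A x j v -> ent A x' j v).
    { intros H j Hj. apply (H (j ⊕ oA)); auto. apply lt_S. }
    induct (fun A m (e : nat -> Mc A) (s : nat -> Sc A) => forall j, lt A j m -> lt A j (e 2) ->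
      lt A j (e 3) /\ forall v, ent A (e 0) j v -> ent A (e 1) j v) (e4 x x' it n') (s1 X0).
    - intros j Hj. exfalso; eapply not_lt0; eauto.
    - intros m IH j Hj Hjit. apply lt_succ_le in Hj. destruct Hj as [Hj| ->]; [apply IH; auto|].
      assert (Hmn : m ≺ n) by (eapply lt_trans; eauto).
      destruct (emb_entry a x n m Hx Hl Hmn) as [r [b [Hr [Hb Hrr]]]].
      assert (Hrt : r ≺ t) by (eapply (emb_mono a x n Hx Hl m it); eauto).
      assert (Hrr' : rc a' r) by (apply F2; auto).
      destruct (Hcov' r Hrr') as [p [bp [Hp Hrp]]].
      destruct (lt_tri p m) as [Hpm|[->|Hpm]].
      + exfalso. destruct (IH p Hpm (lt_trans _ _ _ Hpm Hjit)) as [_ Hag].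
        destruct (emb_entry a x n p Hx Hl (lt_trans _ _ _ Hpm Hmn)) as [rp [bp' [Hrp' _]]].
        pose proof (ent_fun _ _ _ _ Hrp (Hag _ Hrp')) as E. apply pair_inj in E. destruct E; subst rp.
        apply (lt_irr r). eapply (emb_mono a x n Hx Hl p m); eauto.
      + split; auto. intros v Hv. rewrite (ent_fun _ _ _ _ Hv Hr).
        destruct (Hent' m _ Hp Hrp) as [r0 [b0 [E [Hb0 _]]]]. apply pair_inj in E. destruct E; subst r0 b0.
        rewrite (HB2 _ _ _ Hb Hb0). auto.
      + exfalso.
        destruct (emb_entry a' x' n' m Hx' Hl' (lt_trans _ _ _ Hpm Hp)) as [r2 [b2 [Hr2 [_ Hrr2]]]].
        assert (Hr2r : r2 ≺ r) by (eapply (emb_mono a' x' n' Hx' Hl' m p); eauto).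
        assert (Hr2a : rc a r2) by (apply F2; auto; eapply lt_trans; eauto).
        destruct (Hcov r2 Hr2a) as [q [bq [Hq Hrq]]].
        destruct (lt_tri q m) as [Hqm|[->|Hqm]].
        * destruct (IH q Hqm (lt_trans _ _ _ Hqm Hjit)) as [_ Hag].
          apply (lt_irr r2). eapply (emb_mono a' x' n' Hx' Hl' q m); [exact Hqm| exact (lt_trans _ _ _ Hpm Hp) | apply Hag; exact Hrq | exact Hr2].
        * pose proof (ent_fun _ _ _ _ Hr Hrq) as E. apply pair_inj in E. destruct E; subst r2.
          eapply lt_irr; eauto.
        * apply (lt_asym r2 r Hr2r). eapply (emb_mono a x n Hx Hl m q); eauto. }
  assert (Hag : forall j v, j ≺ it -> ent A x' j v -> ent A x j v).
  { intros j v Hj. apply (ent_sym x' x j); [exists n; auto|]. apply HC; auto. }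
  destruct (lt_tri it n') as [Hitn|[Hitn|Hitn]].
  - destruct (emb_entry a' x' n' it Hx' Hl' Hitn) as [r' [b' [Hr' [Hb' Hrr']]]].
    destruct (Hent it _ Hit Hbt) as [r0 [b0 [E [Hb0 _]]]]. apply pair_inj in E. destruct E; subst r0 b0.
    rewrite (HB2 _ _ _ Hb0 Hb') in Hbt.
    assert (Htr : t ≺ r').
    { destruct (lt_tri t r') as [H|[<-|H]]; [auto|tauto|exfalso].
      assert (Hra : rc a r') by (apply F2; auto).
      destruct (Hcov r' Hra) as [q [bq [Hq Hrq]]].
      destruct (lt_tri q it) as [Hqi|[->|Hqi]].
      - destruct (HC q Hqi) as [_ Hag2].
        apply (lt_irr r'). eapply (emb_mono a' x' n' Hx' Hl' q it); eauto.
      - pose proof (ent_fun _ _ _ _ Hbt Hrq) as E. apply pair_inj in E. destruct E; subst r'.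
        eapply lt_irr; eauto.
      - apply (lt_asym _ _ H). eapply (emb_mono a x n Hx Hl it q); eauto. }
    exists n, n'. split; auto. split; auto. right. exists it. refine (conj Hit (conj Hitn (conj Hag _))).
    exists (pair A t b'), (pair A r' b'). refine (conj Hbt (conj Hr' _)). apply pair_mono_l. auto.
  - subst n'. exists n, it. refine (conj Hl (conj Hl' _)). left. split; auto.
  - exfalso. destruct (HC n' Hitn) as [H _]. eapply lt_irr; eauto.
Qed.

Lemma least_node a x : mem A a Da -> em a x -> (forall x', x' ≺ x -> ~ em a x') -> nd x.
Proof.
  intros Ha Hx Hmin. pose proof Hx as [n [Hl [Hent [Hinc Hcov]]]].
  split; [split; [exists n; auto|]|].
  { intros y Hy Hs. apply (Hmin y Hy). eapply emb_seqeq; eauto. }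
  exists n. split; auto. split; [|split].
  - destruct (Hcov a (rec_self a Ha)) as [i [b [Hi _]]]. eapply le_lt_trans; [apply le_0|apply Hi].
  - intros i v Hi Hv. destruct (Hent i v Hi Hv) as [r [b [-> [Hb [Hr _]]]]].
    exists r, b. split; auto. split; auto. eapply Fb_in; eauto.
  - intros i v w Hi Hv Hw.
    assert (Hi' : i ≺ n) by (eapply lt_trans; [apply lt_S|apply Hi]).
    destruct (Hent i v Hi' Hv) as [r [b [-> [Hb Hr]]]].
    destruct (Hent _ w Hi Hw) as [r' [b' [-> [Hb' Hr']]]].
    destruct (Hinc i _ _ Hi Hv Hw) as [r1 [b1 [r2 [b2 [E1 [E2 Hrr]]]]]].
    apply pair_inj in E1. apply pair_inj in E2. destruct E1, E2; subst r1 b1 r2 b2.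
    exists r, b, r', b'. split; auto. split; auto. split.
    + destruct Hr' as [_ [_ H]]. apply H; auto; apply Hr.
    + eapply HB3; eauto.
Qed.

Lemma embedding : Embedding A Da Ra Dd Rd.
Proof.
  destruct (comp_u (fun A z e s => exists a x, z = pair A a x /\ mem A a (s 0) /\
     emb A (s 0) (s 1) (s 2) a x /\ forall x', lt A x' x -> ~ emb A (s 0) (s 1) (s 2) a x')
     ltac:(sdef) A HA (e1 zA) (s3 Da Ra Fb)) as [FE HFE]. unfold_env.
  assert (HFE' : forall a x, mem A (pair A a x) FE <-> mem A a Da /\ em a x /\ forall x', x' ≺ x -> ~ em a x').
  { intros a x. rewrite HFE. split.
    - intros [a' [x' [E H]]]. apply pair_inj in E. destruct E; subst. auto.
    - intros H. exists a, x. auto. }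
  exists FE. split; [|split].
  - intros a Ha. destruct (emb_ex a Ha) as [x0 Hx0].
    destruct (lnp (fun A x e s => emb A (s 0) (s 1) (s 2) (e 0) x) ltac:(sdef) (e1 a) (s3 Da Ra Fb))
      as [x [Hx Hmin]]; [exists x0; auto|]. unfold_env.
    exists x. split; [apply HFE'; auto|]. apply hD. eapply least_node; eauto.
  - intros a y y' Ha H1 H2. apply HFE' in H1. apply HFE' in H2.
    destruct H1 as [_ [H1 M1]]. destruct H2 as [_ [H2 M2]].
    destruct (lt_tri y y') as [H|[H|H]].
    + exfalso. apply (M2 y H H1).
    + exact H.
    + exfalso. apply (M1 y' H H2).
  - intros a a' y y' Ha Ha' H1 H2 Haa. apply HFE' in H1. apply HFE' in H2.
    destruct H1 as [_ [H1 M1]]. destruct H2 as [_ [H2 M2]].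
    apply (hR' y y'). refine (conj (least_node a y Ha H1 M1) (conj (least_node a' y' Ha' H2 M2) _)).
    exact (emb_order a a' y y' Ha Ha' Haa H1 H2).
Qed.

End Emb.
End Tree.

End Arith.


Lemma DefD : DefU (fun A e s => node A (s 0) (s 1) (s 2) (s 3) (e 0)).
Proof. sdef. Qed.
Lemma DefR : DefU (fun A e s => exists x y, e 0 = pair A x y /\ node A (s 0) (s 1) (s 2) (s 3) x /\
   node A (s 0) (s 1) (s 2) (s 3) y /\ kb A x y).
Proof. sdef. Qed.

Theorem lemma5p1 :
  exists thD thR : formula,
    arithmetical thD /\ arithmetical thR /\
    forall (A : L2str), ACA0 A ->
    forall Da Ra Db Rb : Sc A,
      IsLO A Da Ra -> IsLO A Db Rb ->
      forall Dd Rd : Sc A,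
        defines A thD Da Ra Db Rb Dd ->
        defines A thR Da Ra Db Rb Rd ->
        IsLO A Dd Rd /\
        (WO A Dd Rd <-> (WO A Da Ra \/ WO A Db Rb)) /\
        (DescSeq A Db Rb -> Embedding A Da Ra Dd Rd).
Proof.
  destruct DefD as [thD [arD HD]]. destruct DefR as [thR [arR HR]].
  exists thD, thR. split; [exact arD|]. split; [exact arR|].
  intros A HA Da Ra Db Rb HLa HLb Dd Rd Hdd Hdr.
  assert (hD : forall x, mem A x Dd <-> node A Da Ra Db Rb x).
  { intro x. rewrite (Hdd x). symmetry. apply (HD A (fun _ => x) (params A Da Ra Db Rb)). }
  assert (hR : forall z, mem A z Rd <-> exists x y, z = pair A x y /\ node A Da Ra Db Rb x /\
      node A Da Ra Db Rb y /\ kb A x y).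
  { intro z. rewrite (Hdr z). symmetry. apply (HR A (fun _ => z) (params A Da Ra Db Rb)). }
  assert (HL : IsLO A Dd Rd) by exact (L_IsLO A HA Da Da Ra Db Rb Dd Rd hD hR).
  assert (Hemb : DescSeq A Db Rb -> Embedding A Da Ra Dd Rd).
  { intros [Fb [HB1 [HB2 HB3]]]. exact (embedding A HA Da Da Ra Db Rb Dd Rd hD hR HLa Fb HB1 HB2 HB3). }
  split; [exact HL|]. split; [|exact Hemb].
  split.
  - intros [_ HnD].
    destruct (classic (DescSeq A Da Ra)) as [Da'|Da']; [|left; split; auto].
    destruct (classic (DescSeq A Db Rb)) as [Db'|Db']; [|right; split; auto].
    exfalso. apply HnD. exact (desc_comp A HA Da Da Ra Dd Rd Da' (Hemb Db')).
  - intros H. split; [exact HL|]. intros [F [HF1 [HF2 HF3]]].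
    destruct H as [[_ H]|[_ H]]; apply H.
    + exact (path_alpha A HA Da Da Ra Db Rb Dd Rd hD hR F HF1 HF2 HF3).
    + exact (path_beta A HA Da Da Ra Db Rb Dd Rd hD hR F HF1 HF2 HF3).
Qed.
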